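(* Let $\beta$ be a well-formed execution of the SODA algorithm described in the context, and let $\Pi$ be the set of operations of $\beta$ to which a tag is associated as follows: for a write $\pi$, $(tag(\pi),value(\pi))=(t_w,v)$ is the pair it disseminates in its put phase; for a completed read $\pi$, $(tag(\pi),value(\pi))=(t_{read},v)$ where $v$ is the returned value and $t_{read}$ is the tag of the $k$ coded elements it decoded. Define $\pi\prec\phi$ iff $tag(\pi)<tag(\phi)$, or $tag(\pi)=tag(\phi)$ with $\pi$ a write and $\phi$ a read. Then $\prec$ satisfies: (P1) there are no operations $\pi_1,\pi_2$ such that $\pi_1$ completes before $\pi_2$ is invoked and yet $\pi_2\prec\pi_1$; (P2) if $\pi_1$ is a write and $\pi_2$ is any other operation, then $\pi_1\prec\pi_2$ or $\pi_2\prec\pi_1$; (P3) every read returns the value of the last write preceding it with respect to $\prec$, and returns the initial value $v_0$ if no write precedes it.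
   Context: System model: asynchronous message passing with writers $\mathcal{W}$, readers $\mathcal{R}$ and $n$ servers $\mathcal{S}$ ordered $s_1<\dots<s_n$; reliable point-to-point channels between every client and server and every two servers (message eventually delivered if destination does not crash, even if the sender crashes; arbitrary delays and order). Processes fail by crashing only; any number of clients and at most $f$ servers crash, $1\le f\le (n-1)/2$. Well-formed: each client invokes an operation only after its previous one completed. An operation precedes another if its response occurs before the other's invocation. Coding: values in a set $V$ with initial value $v_0$; an $[n,k]$ MDS code with $k=n-f$, encoder $\Phi$ ($\Phi_s(v)$ = coded element for server $s$) and decoder $\Phi^{-1}$ recovering $v$ from any $k$ coded elements of $v$ (with known server indices). Tags: pairs $t=(z,w)$, $z\in\mathbb{N}$, $w\in\mathcal{W}$, with $t_2>t_1$ iff $t_2.z>t_1.z$, or $t_2.z=t_1.z$ and $t_2.w>t_1.w$; $t_0$ is the initial tag (smaller than all others). Dissemination primitives. md-value-send$(t,v)$ by a writer: $(t,v)$ is sent to servers $s_1,\dots,s_{f+1}$; each such $s_i$, on first receipt, forwards $(t,v)$ to $s_{i+1},\dots,s_{f+1}$, sends $(t,\Phi_{s'}(v))$ to every other server $s'$, and then delivers $(t,\Phi_{s_i}(v))$ locally; each other server delivers the coded element $(t,\Phi_{s}(v))$ it receives (''md-value-deliver''). md-meta-send$(m)$: identical, except every server delivers the metadata message $m$ itself (''md-meta-deliver''). Each server delivers each disseminated message once. SODA writer $w$, write$(v)$: (get-tag) send a tag query to all servers, wait for responses (their locally stored tags) from a majority, let $t_{max}$ be the highest; (put) set $t_w=(t_{max}.z+1,w)$,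 invoke md-value-send$(t_w,v)$, wait for acknowledgments from $k$ servers, terminate. SODA reader $r$, read: (get-tag) query all servers for their tags, wait for a majority, let $t_r$ be the highest; (get-data) invoke md-meta-send(READ-VALUE,$(r,t_r)$), and collect received pairs $(t,c)$ until $k$ of them, from distinct servers, carry the same tag $t_{read}$; decode $v=\Phi^{-1}$ of these $k$ coded elements; (complete) invoke md-meta-send(READ-COMPLETE,$(r,t_r)$) and return $v$. (Each read carries a unique identifier in addition to $r$.) SODA server $s$: state: a pair $(t,c_s)$, initially $(t_0,\Phi_s(v_0))$; a set $R_c$ of registered pairs $(r,t_r)$, initially empty; a set $H$ of triples $(t,s',r)$, initially empty. On a tag query from a writer or reader: reply with local $t$. On md-value-deliver$(t_w,c'_s)$: for each $(r,t_r)\in R_c$ with $t_w\ge t_r$: send $(t_w,c'_s)$ to $r$, add $(t_w,s,r)$ to $H$, invoke md-meta-send(READ-DISPERSE,$(t_w,s,r)$); then if $t_w>t$ set $(t,c_s)\gets(t_w,c'_s)$; send an acknowledgment to the writer. On md-meta-deliver(READ-VALUE,$(r,t_r)$): if $(t_0,s,r)\in H$, remove from $H$ all triples with reader $r$; else add $(r,t_r)$ to $R_c$ and, if $t\ge t_r$, send $(t,c_s)$ to $r$, add $(t,s,r)$ to $H$ and invoke md-meta-send(READ-DISPERSE,$(t,s,r)$). On md-meta-deliver(READ-COMPLETE,$(r,t_r)$): if some $(r,t'_r)\in R_c$, remove it and remove all triples with reader $r$ from $H$; else add $(t_0,s,r)$ to $H$. On md-meta-deliver(READ-DISPERSE,$(t,s',r)$):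 add $(t,s',r)$ to $H$; if some $(r,t_r)\in R_c$ and the number of triples in $H$ with tag $t$ and reader $r$ is at least $k$, remove $(r,t_r)$ from $R_c$ and remove all triples with reader $r$ from $H$. *)

(* Defs.v *)
From HB Require Import structures.
From mathcomp Require Import all_boot.
From Stdlib Require List.

Set Implicit Arguments.
Unset Strict Implicit.
Unset Printing Implicit Defensive.

(* Tags t = (z, w), lexicographically ordered; t0 = (0,0) is smaller   *)
(* than every tag ever created (writers create tags with z >= 1).      *)
Definition tag := (nat * nat)%type.
Definition t0 : tag := (0, 0).
Definition tag_lt (a b : tag) : bool :=
  (a.1 < b.1) || ((a.1 == b.1) && (a.2 < b.2)).
Definition tag_le (a b : tag) : bool := (a == b) || tag_lt a b.
Definition tag_max (a b : tag) : tag := if tag_lt a b then b else a.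

(* Operation identifiers: (client id, sequence number of the operation
   at that client).  A read identifier is the unique read identifier. *)
Definition wid := (nat * nat)%type.
Definition rid := (nat * nat)%type.

Inductive op := OpW of wid | OpR of rid.

Inductive proc := Writer of nat | Reader of nat | Server of nat.
(* servers s_1 < ... < s_n are Server 0, ..., Server (n-1) *)

Definition client_of (o : op) : proc :=
  match o with OpW w => Writer w.1 | OpR r => Reader r.1 end.

Inductive meta :=
| ReadValue of rid & tag
| ReadComplete of rid & tag
| ReadDisperse of tag & nat & rid.

Definition meta_enc (m : meta) : nat * (tag * nat * rid) :=
  match m with
  | ReadValue r t => (0, (t, 0, r))
  | ReadComplete r t => (1, (t, 0, r))
  | ReadDisperse t s r => (2, (t, s, r))
  end.
Definition meta_dec (x : nat * (tag * nat * rid)) : meta :=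
  match x.1 with
  | 0 => ReadValue x.2.2 x.2.1.1
  | 1 => ReadComplete x.2.2 x.2.1.1
  | _ => ReadDisperse x.2.1.1 x.2.1.2 x.2.2
  end.
Lemma meta_encK : cancel meta_enc meta_dec. Proof. by case. Qed.
HB.instance Definition _ := Equality.copy meta (can_type meta_encK).

Definition sadd (T : eqType) (x : T) (l : seq T) : seq T :=
  if x \in l then l else rcons l x.

Definition upd (T : Type) (g : nat -> T) (i : nat) (x : T) : nat -> T :=
  fun j => if j == i then x else g j.

Section Soda.
Variables (V C : Type).

Inductive payload :=
| PTagQuery of op                  (* client -> server *)
| PTagResp of op & tag             (* server -> client *)
| PValFull of wid & tag & V
| PValCoded of wid & tag & C
| PAck of wid                      (* server -> writer *)
| PMeta of meta
| PCoded of rid & tag & C.         (* server -> reader: pair (t,c) *)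

(* external/observable actions of the execution; every other step is LTau *)
Inductive label :=
| LInvW of wid & V
| LPut of wid & tag & V       (* put phase starts: disseminates (t_w, v) *)
| LRespW of wid
| LInvR of rid
| LRespR of rid & V & tag     (* read returns v; t = t_read (tag decoded) *)
| LTau.

Record sstate := SState {
  s_tag : tag; s_c : C;
  s_Rc : seq (rid * tag);
  s_H : seq (tag * nat * rid);
  s_dval : seq wid;      (* value disseminations already delivered *)
  s_dmeta : seq meta;    (* meta disseminations already delivered *)
  s_crashed : bool;
  s_out : seq (proc * payload) }.  (* messages not yet sent, in order *)

Inductive wphase :=
| WIdle
| WGet of wid & V & seq (nat * tag)   (* tag responses from distinct servers *)
| WPut of wid & tag & seq nat.        (* acks from distinct servers *)

Record wstate := WState {
  w_cnt : nat; w_ph : wphase; w_crashed : bool; w_out : seq (proc * payload) }.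

Inductive rphase :=
| RIdle
| RGet of rid & seq (nat * tag)
| RData of rid & tag & seq (nat * tag * C).

Record rstate := RState {
  r_cnt : nat; r_ph : rphase; r_crashed : bool; r_out : seq (proc * payload) }.

Record gstate := GState {
  g_srv : nat -> sstate;
  g_w : nat -> wstate;
  g_r : nat -> rstate;
  g_net : seq (proc * proc * payload) }.  (* (source, destination, payload) *)

Variables (n f : nat) (v0 : V) (Phi : nat -> V -> C)
          (Phiinv : seq (nat * C) -> V).

Definition k := n - f.

Definition s_add_out (l : seq (proc * payload)) (st : sstate) :=
  SState (s_tag st) (s_c st) (s_Rc st) (s_H st) (s_dval st) (s_dmeta st)
         (s_crashed st) (s_out st ++ l).
Definition s_set_RcH Rc H (st : sstate) :=
  SState (s_tag st) (s_c st) Rc H (s_dval st) (s_dmeta st) (s_crashed st) (s_out st).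
Definition s_add_dval w (st : sstate) :=
  SState (s_tag st) (s_c st) (s_Rc st) (s_H st) (w :: s_dval st) (s_dmeta st)
         (s_crashed st) (s_out st).
Definition s_add_dmeta m (st : sstate) :=
  SState (s_tag st) (s_c st) (s_Rc st) (s_H st) (s_dval st) (m :: s_dmeta st)
         (s_crashed st) (s_out st).
Definition s_crash (st : sstate) :=
  SState (s_tag st) (s_c st) (s_Rc st) (s_H st) (s_dval st) (s_dmeta st)
         true (s_out st).
Definition s_set_out l (st : sstate) :=
  SState (s_tag st) (s_c st) (s_Rc st) (s_H st) (s_dval st) (s_dmeta st)
         (s_crashed st) l.

Definition to_servers (lo cnt : nat) (p : payload) : seq (proc * payload) :=
  [seq (Server i, p) | i <- iota lo cnt].

Definition md_value_send w t v := to_servers 0 f.+1 (PValFull w t v).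
Definition md_meta_send m := to_servers 0 f.+1 (PMeta m).

(* what server s (index s, i.e. s_{s+1}) sends on first receipt of a full
   value message, before delivering locally: forward to s_{i+1..f+1} and
   coded elements to every server outside s_1..s_{f+1}. *)
Definition fwd_value (s : nat) w t (v : V) : seq (proc * payload) :=
  if s <= f then
    to_servers s.+1 (f - s) (PValFull w t v) ++
    [seq (Server i, PValCoded w t (Phi i v)) | i <- iota f.+1 (n - f.+1)]
  else [::].
Definition fwd_meta (s : nat) m : seq (proc * payload) :=
  if s <= f then to_servers s.+1 (f - s) (PMeta m) ++ to_servers f.+1 (n - f.+1) (PMeta m)
  else [::].

(* md-value-deliver(t_w, c') at server s; L enumerates (in some order) the
   registered pairs (r,t_r) in R_c with t_w >= t_r. *)
Definition srv_value_deliver (s : nat) (w : wid) (tw : tag) (c' : C)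
    (L : seq (rid * tag)) (st : sstate) : sstate :=
  let sends := flatten [seq (Reader x.1.1, PCoded x.1 tw c')
                              :: md_meta_send (ReadDisperse tw s x.1) | x <- L] in
  let H' := foldl (fun H x => sadd (tw, s, x.1) H) (s_H st) L in
  let b := tag_lt (s_tag st) tw in
  SState (if b then tw else s_tag st) (if b then c' else s_c st)
         (s_Rc st) H' (s_dval st) (s_dmeta st) (s_crashed st)
         (s_out st ++ sends ++ [:: (Writer w.1, PAck w)]).

Definition srv_meta_deliver (s : nat) (m : meta) (st : sstate) : sstate :=
  match m with
  | ReadValue r tr =>
      if (t0, s, r) \in s_H st then
        s_set_RcH (s_Rc st) [seq x <- s_H st | x.2 != r] st
      else
        let Rc' := sadd (r, tr) (s_Rc st) in
        if tag_le tr (s_tag st) then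
          s_add_out ((Reader r.1, PCoded r (s_tag st) (s_c st))
                       :: md_meta_send (ReadDisperse (s_tag st) s r))
            (s_set_RcH Rc' (sadd (s_tag st, s, r) (s_H st)) st)
        else s_set_RcH Rc' (s_H st) st
  | ReadComplete r tr =>
      if has (fun x => x.1 == r) (s_Rc st) then
        s_set_RcH [seq x <- s_Rc st | x.1 != r] [seq x <- s_H st | x.2 != r] st
      else s_set_RcH (s_Rc st) (sadd (t0, s, r) (s_H st)) st
  | ReadDisperse t s' r =>
      let H' := sadd (t, s', r) (s_H st) in
      if has (fun x => x.1 == r) (s_Rc st)
         && (k <= count (fun x => (x.1.1 == t) && (x.2 == r)) H') then
        s_set_RcH [seq x <- s_Rc st | x.1 != r] [seq x <- H' | x.2 != r] st
      else s_set_RcH (s_Rc st) H' st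
  end.

Inductive srv_recv (s : nat) : payload -> sstate -> sstate -> Prop :=
| SR_query o st :
    srv_recv s (PTagQuery o) st (s_add_out [:: (client_of o, PTagResp o (s_tag st))] st)
| SR_full_dup w t v st : w \in s_dval st -> srv_recv s (PValFull w t v) st st
| SR_full w t v L st :
    w \notin s_dval st ->
    perm_eq L [seq x <- s_Rc st | tag_le x.2 t] ->
    srv_recv s (PValFull w t v) st
      (srv_value_deliver s w t (Phi s v) L (s_add_dval w (s_add_out (fwd_value s w t v) st)))
| SR_coded_dup w t c st : w \in s_dval st -> srv_recv s (PValCoded w t c) st st
| SR_coded w t c L st :
    w \notin s_dval st ->
    perm_eq L [seq x <- s_Rc st | tag_le x.2 t] ->
    srv_recv s (PValCoded w t c) st (srv_value_deliver s w t c L (s_add_dval w st))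
| SR_meta_dup m st : m \in s_dmeta st -> srv_recv s (PMeta m) st st
| SR_meta m st :
    m \notin s_dmeta st ->
    srv_recv s (PMeta m) st (srv_meta_deliver s m (s_add_dmeta m (s_add_out (fwd_meta s m) st))).

Definition majority (l : seq (nat * tag)) := n < 2 * size l.
Definition max_tag (l : seq (nat * tag)) : tag := foldl tag_max t0 (map snd l).
Definition add_resp (s : nat) (t : tag) (l : seq (nat * tag)) :=
  if s \in map fst l then l else rcons l (s, t).

Definition w_set (cnt : nat) ph (out : seq (proc * payload)) (st : wstate) :=
  WState cnt ph (w_crashed st) out.

Inductive w_recv (wi : nat) (s : nat) : payload -> wstate -> label -> wstate -> Prop :=
| WR_resp_wait w v resp t st :
    w_ph st = WGet w v resp -> ~~ majority (add_resp s t resp) ->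
    w_recv wi s (PTagResp (OpW w) t) st LTau
      (w_set (w_cnt st) (WGet w v (add_resp s t resp)) (w_out st) st)
| WR_resp_put w v resp t st :
    w_ph st = WGet w v resp -> majority (add_resp s t resp) ->
    let tw := ((max_tag (add_resp s t resp)).1.+1, wi) in
    w_recv wi s (PTagResp (OpW w) t) st (LPut w tw v)
      (w_set (w_cnt st) (WPut w tw [::]) (w_out st ++ md_value_send w tw v) st)
| WR_resp_ignore o t st :
    (forall w v resp, w_ph st = WGet w v resp -> o <> OpW w) ->
    w_recv wi s (PTagResp o t) st LTau st
| WR_ack_wait w t acks st :
    w_ph st = WPut w t acks -> size (sadd s acks) < k ->
    w_recv wi s (PAck w) st LTau (w_set (w_cnt st) (WPut w t (sadd s acks)) (w_out st) st)
| WR_ack_done w t acks st :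
    w_ph st = WPut w t acks -> k <= size (sadd s acks) ->
    w_recv wi s (PAck w) st (LRespW w) (w_set (w_cnt st) WIdle (w_out st) st)
| WR_ack_ignore w st :
    (forall w' t acks, w_ph st = WPut w' t acks -> w <> w') ->
    w_recv wi s (PAck w) st LTau st.

Definition r_set (cnt : nat) ph (out : seq (proc * payload)) (st : rstate) :=
  RState cnt ph (r_crashed st) out.

Definition decodable (t : tag) (recv : seq (nat * tag * C)) (L : seq (nat * C)) :=
  size L = k /\ uniq (map fst L) /\
  forall x, List.In x L -> List.In (x.1, t, x.2) recv.

Inductive r_recv (s : nat) : payload -> rstate -> label -> rstate -> Prop :=
| RR_resp_wait r resp t st :
    r_ph st = RGet r resp -> ~~ majority (add_resp s t resp) ->
    r_recv s (PTagResp (OpR r) t) st LTau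
      (r_set (r_cnt st) (RGet r (add_resp s t resp)) (r_out st) st)
| RR_resp_data r resp t st :
    r_ph st = RGet r resp -> majority (add_resp s t resp) ->
    let tr := max_tag (add_resp s t resp) in
    r_recv s (PTagResp (OpR r) t) st LTau
      (r_set (r_cnt st) (RData r tr [::]) (r_out st ++ md_meta_send (ReadValue r tr)) st)
| RR_resp_ignore o t st :
    (forall r resp, r_ph st = RGet r resp -> o <> OpR r) ->
    r_recv s (PTagResp o t) st LTau st
| RR_data_wait r tr recv t c st :
    r_ph st = RData r tr recv ->
    ~ (exists t' L, decodable t' (rcons recv (s, t, c)) L) ->
    r_recv s (PCoded r t c) st LTau
      (r_set (r_cnt st) (RData r tr (rcons recv (s, t, c))) (r_out st) st)
| RR_data_done r tr recv t c st t' L :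
    r_ph st = RData r tr recv ->
    decodable t' (rcons recv (s, t, c)) L ->
    r_recv s (PCoded r t c) st (LRespR r (Phiinv L) t')
      (r_set (r_cnt st) RIdle (r_out st ++ md_meta_send (ReadComplete r tr)) st)
| RR_data_ignore r t c st :
    (forall r' tr recv, r_ph st = RData r' tr recv -> r <> r') ->
    r_recv s (PCoded r t c) st LTau st.

Definition g_set_srv (g : gstate) i x := GState (upd (g_srv g) i x) (g_w g) (g_r g) (g_net g).
Definition g_set_w (g : gstate) i x := GState (g_srv g) (upd (g_w g) i x) (g_r g) (g_net g).
Definition g_set_r (g : gstate) i x := GState (g_srv g) (g_w g) (upd (g_r g) i x) (g_net g).
Definition g_set_net (g : gstate) net := GState (g_srv g) (g_w g) (g_r g) net.

Definition n_crashed (g : gstate) := count (fun i => s_crashed (g_srv g i)) (iota 0 n).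

Inductive step : gstate -> label -> gstate -> Prop :=
(* invocations (only when the client is idle: well-formedness) *)
| St_inv_write g wi v :
    ~~ w_crashed (g_w g wi) -> w_ph (g_w g wi) = WIdle ->
    let w := (wi, w_cnt (g_w g wi)) in
    step g (LInvW w v)
      (g_set_w g wi (w_set (w_cnt (g_w g wi)).+1 (WGet w v [::])
                      (w_out (g_w g wi) ++ to_servers 0 n (PTagQuery (OpW w))) (g_w g wi)))
| St_inv_read g ri :
    ~~ r_crashed (g_r g ri) -> r_ph (g_r g ri) = RIdle ->
    let r := (ri, r_cnt (g_r g ri)) in
    step g (LInvR r)
      (g_set_r g ri (r_set (r_cnt (g_r g ri)).+1 (RGet r [::])
                      (r_out (g_r g ri) ++ to_servers 0 n (PTagQuery (OpR r))) (g_r g ri)))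
| St_send_srv g s dst p rest :
    ~~ s_crashed (g_srv g s) -> s_out (g_srv g s) = (dst, p) :: rest ->
    step g LTau (g_set_net (g_set_srv g s (s_set_out rest (g_srv g s)))
                           (rcons (g_net g) (Server s, dst, p)))
| St_send_w g wi dst p rest :
    ~~ w_crashed (g_w g wi) -> w_out (g_w g wi) = (dst, p) :: rest ->
    step g LTau (g_set_net (g_set_w g wi (w_set (w_cnt (g_w g wi)) (w_ph (g_w g wi)) rest (g_w g wi)))
                           (rcons (g_net g) (Writer wi, dst, p)))
| St_send_r g ri dst p rest :
    ~~ r_crashed (g_r g ri) -> r_out (g_r g ri) = (dst, p) :: rest ->
    step g LTau (g_set_net (g_set_r g ri (r_set (r_cnt (g_r g ri)) (r_ph (g_r g ri)) rest (g_r g ri)))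
                           (rcons (g_net g) (Reader ri, dst, p)))
(* delivery of an arbitrary in-transit message (arbitrary delay/order) *)
| St_recv_srv g n1 n2 src s p st' :
    g_net g = n1 ++ (src, Server s, p) :: n2 -> ~~ s_crashed (g_srv g s) ->
    srv_recv s p (g_srv g s) st' ->
    step g LTau (g_set_net (g_set_srv g s st') (n1 ++ n2))
| St_recv_w g n1 n2 s wi p l st' :
    g_net g = n1 ++ (Server s, Writer wi, p) :: n2 -> ~~ w_crashed (g_w g wi) ->
    w_recv wi s p (g_w g wi) l st' ->
    step g l (g_set_net (g_set_w g wi st') (n1 ++ n2))
| St_recv_r g n1 n2 s ri p l st' :
    g_net g = n1 ++ (Server s, Reader ri, p) :: n2 -> ~~ r_crashed (g_r g ri) ->
    r_recv s p (g_r g ri) l st' ->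
    step g l (g_set_net (g_set_r g ri st') (n1 ++ n2))
| St_crash_srv g s :
    s < n -> ~~ s_crashed (g_srv g s) -> n_crashed g < f ->
    step g LTau (g_set_srv g s (s_crash (g_srv g s)))
| St_crash_w g wi :
    step g LTau (g_set_w g wi (WState (w_cnt (g_w g wi)) (w_ph (g_w g wi)) true (w_out (g_w g wi))))
| St_crash_r g ri :
    step g LTau (g_set_r g ri (RState (r_cnt (g_r g ri)) (r_ph (g_r g ri)) true (r_out (g_r g ri)))).

Definition init : gstate :=
  GState (fun s => SState t0 (Phi s v0) [::] [::] [::] [::] false [::])
         (fun _ => WState 0 WIdle false [::])
         (fun _ => RState 0 RIdle false [::])
         [::].

Inductive reachable : seq label -> gstate -> Prop :=
| Reach0 : reachable [::] init
| ReachS tr g l g' : reachable tr g -> step g l g' -> reachable (rcons tr l) g'.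

(* o is in Pi with (tag(o), value(o)) = (t, v) *)
Definition tagged (tr : seq label) (o : op) (t : tag) (v : V) : Prop :=
  match o with
  | OpW w => List.In (LPut w t v) tr
  | OpR r => List.In (LRespR r v t) tr
  end.

Definition is_write (o : op) := if o is OpW _ then true else false.
Definition is_read (o : op) := if o is OpR _ then true else false.

Definition prec (o1 : op) (t1 : tag) (o2 : op) (t2 : tag) : Prop :=
  tag_lt t1 t2 \/ (t1 = t2 /\ is_write o1 /\ is_read o2).

Definition is_inv (o : op) (l : label) : Prop :=
  match o, l with
  | OpW w, LInvW w' _ => w = w'
  | OpR r, LInvR r' => r = r'
  | _, _ => False
  end.
Definition is_resp (o : op) (l : label) : Prop :=
  match o, l with
  | OpW w, LRespW w' => w = w'
  | OpR r, LRespR r' _ _ => r = r'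
  | _, _ => False
  end.

Definition completes_before (tr : seq label) (o1 o2 : op) : Prop :=
  exists i j l1 l2, i < j /\ List.nth_error tr i = Some l1 /\ is_resp o1 l1 /\
                    List.nth_error tr j = Some l2 /\ is_inv o2 l2.

Definition P1 (tr : seq label) : Prop :=
  forall o1 t1 v1 o2 t2 v2, tagged tr o1 t1 v1 -> tagged tr o2 t2 v2 ->
    completes_before tr o1 o2 -> ~ prec o2 t2 o1 t1.

Definition P2 (tr : seq label) : Prop :=
  forall o1 t1 v1 o2 t2 v2, tagged tr o1 t1 v1 -> tagged tr o2 t2 v2 ->
    is_write o1 -> o1 <> o2 -> prec o1 t1 o2 t2 \/ prec o2 t2 o1 t1.

Definition P3 (tr : seq label) : Prop :=
  forall r t v, tagged tr (OpR r) t v ->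
    ((~ exists w tw vw, tagged tr (OpW w) tw vw /\ prec (OpW w) tw (OpR r) t) -> v = v0) /\
    ((exists w tw vw, tagged tr (OpW w) tw vw /\ prec (OpW w) tw (OpR r) t) ->
     exists w tw vw, tagged tr (OpW w) tw vw /\ prec (OpW w) tw (OpR r) t /\ v = vw /\
       forall w' tw' vw', tagged tr (OpW w') tw' vw' -> prec (OpW w') tw' (OpR r) t ->
         w' = w \/ prec (OpW w') tw' (OpW w) tw).

End Soda.

Definition mds_decodes (V C : Type) (n k : nat) (Phi : nat -> V -> C)
    (Phiinv : seq (nat * C) -> V) : Prop :=
  forall (v : V) (L : seq nat), uniq L -> size L = k -> all (fun i => i < n) L ->
    Phiinv [seq (i, Phi i v) | i <- L] = v.

(* Main.v *)
Require Import Defs.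
From HB Require Import structures.
From mathcomp Require Import all_boot.
From mathcomp Require Import zify.
From Stdlib Require List.

Set Implicit Arguments.
Unset Strict Implicit.
Unset Printing Implicit Defensive.


Lemma tag_le_refl (a : Defs.tag) : tag_le a a.
Proof. by rewrite /tag_le eqxx. Qed.

Lemma tag_le_trans (a b c : Defs.tag) : tag_le a b -> tag_le b c -> tag_le a c.
Proof. case: a b c => [a1 a2] [b1 b2] [c1 c2]; rewrite /tag_le /tag_lt /= !xpair_eqE. lia. Qed.

Lemma tag_lt_le (a b : Defs.tag) : tag_lt a b -> tag_le a b.
Proof. by rewrite /tag_le => ->; rewrite orbT. Qed.

Lemma tag_le_lt_trans (a b c : Defs.tag) : tag_le a b -> tag_lt b c -> tag_lt a c.
Proof. case: a b c => [a1 a2] [b1 b2] [c1 c2]; rewrite /tag_le /tag_lt /= !xpair_eqE. lia. Qed.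

Lemma tag_le_lt_false (a b : Defs.tag) : tag_le a b -> tag_lt b a -> False.
Proof. case: a b => [a1 a2] [b1 b2]; rewrite /tag_le /tag_lt /= !xpair_eqE. lia. Qed.

Lemma tag_lt_irr (a : Defs.tag) : tag_lt a a = false.
Proof. case: a => [a1 a2]; rewrite /tag_lt /=. lia. Qed.

Lemma tag_total (a b : Defs.tag) : tag_lt a b \/ a = b \/ tag_lt b a.
Proof.
case: a b => [a1 a2] [b1 b2]; rewrite /tag_lt /=.
case: (ltngtP a1 b1) => H; first by left.
- by right; right.
- case: (ltngtP a2 b2) => H2; [left | right;right | right;left]; rewrite ?H ?H2 //=; lia.
Qed.

Lemma tag_max_le_l (a b : Defs.tag) : tag_le a (tag_max a b).
Proof. rewrite /tag_max; case: ifP => H; [exact: tag_lt_le | exact: tag_le_refl]. Qed.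

Lemma tag_max_le_r (a b : Defs.tag) : tag_le b (tag_max a b).
Proof.
rewrite /tag_max; case: ifP => H; first exact: tag_le_refl.
case: (tag_total a b) => [H'|[->|H']]; [by rewrite H' in H | exact: tag_le_refl | exact: tag_lt_le].
Qed.

Lemma foldl_max_ge (l : seq Defs.tag) (a : Defs.tag) : tag_le a (foldl tag_max a l).
Proof.
elim: l a => [|x l IH] a /=; first exact: tag_le_refl.
exact: tag_le_trans (tag_max_le_l a x) (IH _).
Qed.

Lemma foldl_max_in (l : seq Defs.tag) (a x : Defs.tag) : x \in l -> tag_le x (foldl tag_max a l).
Proof.
elim: l a => [|y l IH] a //=; rewrite inE => /orP [/eqP ->|Hx].
- exact: tag_le_trans (tag_max_le_r a y) (foldl_max_ge _ _).
- exact: IH.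
Qed.

Lemma max_tag_in (l : seq (nat * Defs.tag)) s t : (s, t) \in l -> tag_le t (max_tag l).
Proof. move=> H; apply: foldl_max_in; apply/mapP; by exists (s, t). Qed.

Lemma In_rcons (T : Type) (x l : T) tr : List.In x (rcons tr l) <-> List.In x tr \/ x = l.
Proof.
elim: tr => [|y tr IH] /=; first by split; [case=> // ->; right | case=> // ->; left].
rewrite IH; tauto.
Qed.

Lemma decomp_rcons (T : Type) (tr pre post : seq T) (x l : T) :
  rcons tr l = pre ++ x :: post ->
  (pre = tr /\ x = l /\ post = [::]) \/ exists post', post = rcons post' l /\ tr = pre ++ x :: post'.
Proof.
elim/last_ind: post => [|post y _].
- rewrite cats1 => /rcons_inj [-> ->]; by left.
- rewrite -rcons_cons -rcons_cat => /rcons_inj [-> ->].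
  right; by exists post.
Qed.

Lemma In_app_l (T : Type) (x : T) a b : List.In x a -> List.In x (a ++ b).
Proof. move=> H; apply: List.in_or_app; by left. Qed.

Lemma In_split' (T : Type) (x : T) l : List.In x l -> exists pre post, l = pre ++ x :: post.
Proof. move=> H; case: (List.in_split x l H) => [pre [post ->]]; by exists pre, post. Qed.

Lemma nth_error_split (T : Type) (l : seq T) j x :
  List.nth_error l j = Some x -> l = take j l ++ x :: drop j.+1 l.
Proof.
elim: l j => [|y l IH] [|j] //=.
- by move=> [] <-; rewrite drop0.
- by move/IH => {1}->.
Qed.

Lemma nth_error_In_take (T : Type) (l : seq T) i j x :
  i < j -> List.nth_error l i = Some x -> List.In x (take j l).
Proof.
elim: l i j => [|y l IH] [|i] [|j] //=.
- by move=> _ [] ->; left.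
- move=> Hij H; right; exact: IH H.
Qed.

Lemma uniq_size_lt (Q : seq nat) n : uniq Q -> all (fun s => s < n) Q -> size Q <= n.
Proof.
move=> U A; rewrite -(size_iota 0 n); apply: uniq_leq_size => // x Hx.
rewrite mem_iota /=; by move/allP: A => /(_ x Hx).
Qed.

Lemma quorum_inter (n f : nat) (Q R : seq nat) :
  f <= (n - 1) %/ 2 ->
  uniq Q -> n - f <= size Q -> all (fun s => s < n) Q ->
  uniq R -> n < 2 * size R -> all (fun s => s < n) R ->
  exists s, s \in Q /\ s \in R.
Proof.
move=> Hf UQ SQ AQ UR SR AR.
case H: (has (mem Q) R).
- move/hasP: H => [s H1 H2]; by exists s.
- have D : uniq (Q ++ R).
    rewrite cat_uniq UQ UR andbT /=; apply/hasPn => x Hx; apply/negP => HQ.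
    move/hasP: H; apply; by exists x.
  have := uniq_size_lt D (n := n); rewrite all_cat AQ AR size_cat => /(_ isT).
  have : 2 * ((n - 1) %/ 2) <= n - 1 by rewrite mulnC leq_trunc_div.
  lia.
Qed.

Lemma InE (T : eqType) (x : T) (s : seq T) : List.In x s <-> x \in s.
Proof.
elim: s => [|y s IH] //=; rewrite inE IH; split.
- by case=> [->|->]; rewrite ?eqxx ?orbT.
- by case/orP => [/eqP ->|]; [left | right].
Qed.

Lemma In_flatten_map (A B : Type) (F : A -> seq B) (L : seq A) y :
  List.In y (flatten (map F L)) -> exists x, List.In x L /\ List.In y (F x).
Proof.
elim: L => [|x L IH] //= H; case: (List.in_app_or _ _ _ H) => [{}H|/IH [z [H1 H2]]].
- by exists x; split => //; left.
- by exists z; split => //; right.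
Qed.

Lemma In_app (T : Type) (x : T) (a b : seq T) : List.In x (a ++ b) -> List.In x a \/ List.In x b.
Proof. exact: List.in_app_or. Qed.

Lemma all_In (T : Type) (p : pred T) (L : seq T) : (forall x, List.In x L -> p x) -> all p L.
Proof. elim: L => [|x L IH] //= H; rewrite H ?IH //; [by move=> y Hy; apply: H; right | by left]. Qed.

Lemma mem_map_fst (A : eqType) (B : Type) (L : seq (A * B)) a :
  a \in map fst L -> exists x, List.In x L /\ x.1 = a.
Proof.
elim: L => [|x L IH] //=; rewrite inE => /orP [/eqP ->|/IH [y [H1 H2]]].
- by exists x; split => //; left.
- by exists y; split => //; right.
Qed.


Arguments RGet {C} _ _.
Arguments RIdle {C}.
Arguments WPut {V} _ _ _.
Arguments WIdle {V}.
Arguments PTagQuery {V C} _.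
Arguments PTagResp {V C} _ _.
Arguments PAck {V C} _.
Arguments PMeta {V C} _.
Arguments PValFull {V C} _ _ _.
Arguments PValCoded {V C} _ _ _.
Arguments PCoded {V C} _ _ _.
Arguments LInvR {V} _.
Arguments LRespW {V} _.
Arguments LTau {V}.

Section SodaProof.
Variables (V C : Type) (n f : nat) (v0 : V) (Phi : nat -> V -> C)
          (Phiinv : seq (nat * C) -> V).

Local Notation gst := (gstate V C).
Local Notation lab := (label V).
Local Notation pay := (payload V C).
Local Notation trace := (seq lab).

Definition stag (g : gst) s := s_tag (g_srv g s).

Definition inflight (g : gst) (src dst : proc) (p : pay) : Prop :=
  List.In (src, dst, p) (g_net g) \/
  match src with
  | Server s => List.In (dst, p) (s_out (g_srv g s))
  | Writer wi => List.In (dst, p) (w_out (g_w g wi))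
  | Reader ri => List.In (dst, p) (r_out (g_r g ri))
  end.

Definition good_tc (tr : trace) i (t : Defs.tag) (c : C) :=
  (t = t0 /\ c = Phi i v0) \/ exists w v, List.In (LPut w t v) tr /\ c = Phi i v.

Definition opfresh (g : gst) (o : op) :=
  match o with
  | OpW w => w.2 < w_cnt (g_w g w.1)
  | OpR r => r.2 < r_cnt (g_r g r.1)
  end.

Definition rvOK (g : gst) (r : rid) (x : Defs.tag) :=
  r.2 < r_cnt (g_r g r.1) /\ (forall resp, r_ph (g_r g r.1) <> RGet r resp) /\
  (forall trr recv, r_ph (g_r g r.1) = RData r trr recv -> x = trr).

Definition pcOK (tr : trace) (g : gst) s (r : rid) t c :=
  r.2 < r_cnt (g_r g r.1) /\ (forall resp, r_ph (g_r g r.1) <> RGet r resp) /\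
  (forall trr recv, r_ph (g_r g r.1) = RData r trr recv -> tag_le trr t) /\
  tag_le t (stag g s) /\ good_tc tr s t c.

Definition msgP (tr : trace) (g : gst) (src dst : proc) (p : pay) : Prop :=
  (forall s, src = Server s -> s < n) /\ (forall s, dst = Server s -> s < n) /\
  match p with
  | PTagQuery o => opfresh g o
  | PTagResp o _ => opfresh g o
  | PValFull w t v => List.In (LPut w t v) tr
  | PValCoded w t c => exists i v, dst = Server i /\ List.In (LPut w t v) tr /\ c = Phi i v
  | PAck w => exists s t v, src = Server s /\ List.In (LPut w t v) tr /\ tag_le t (stag g s)
  | PMeta (ReadValue r x) => rvOK g r x
  | PMeta _ => True
  | PCoded r t c => exists s, src = Server s /\ dst = Reader r.1 /\ pcOK tr g s r t c
  end.

Definition Qgood (g : gst) t (Q : seq nat) :=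
  uniq Q /\ n - f <= size Q /\ all (fun s => s < n) Q /\ forall s, s \in Q -> tag_le t (stag g s).

Definition respOK (Q : seq nat) (resp : seq (nat * Defs.tag)) t1 :=
  forall s t, (s, t) \in resp -> s \in Q -> tag_le t1 t.

Definition msgOK (g : gst) (Q : seq nat) (o : op) t1 :=
  forall s dst t, inflight g (Server s) dst (PTagResp o t) -> s \in Q -> tag_le t1 t.

Definition GetOK g Q o resp t1 := Qgood g t1 Q /\ respOK Q resp t1 /\ msgOK g Q o t1.

Definition DoneTag (pre : trace) (o : op) t :=
  match o with
  | OpW w => List.In (LRespW w) pre /\ exists v, List.In (LPut w t v) pre
  | OpR r => exists v, List.In (LRespR r v t) pre
  end.

Definition FRcond (tr : trace) (g : gst) (o2 : op) t1 :=
  match o2 with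
  | OpW w => (forall t2 v2, List.In (LPut w t2 v2) tr -> tag_lt t1 t2) /\
             (forall v resp, w_ph (g_w g w.1) = WGet w v resp ->
                exists Q, GetOK g Q (OpW w) resp t1)
  | OpR r => (forall v2 t2, List.In (LRespR r v2 t2) tr -> tag_le t1 t2) /\
             (forall resp, r_ph (g_r g r.1) = RGet r resp ->
                exists Q, GetOK g Q (OpR r) resp t1) /\
             (forall trr recv, r_ph (g_r g r.1) = RData r trr recv -> tag_le t1 trr)
  end.

Definition WInv (tr : trace) (g : gst) wi :=
  let st := g_w g wi in
  (forall c v, List.In (LInvW (wi, c) v) tr -> c < w_cnt st) /\
  (forall c t v, List.In (LPut (wi, c) t v) tr -> c < w_cnt st /\
        ((exists acks, w_ph st = WPut (wi, c) t acks) \/ List.In (LRespW (wi, c)) tr)) /\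
  match w_ph st with
  | WIdle => True
  | WGet w v resp => w.1 = wi /\ w.2 < w_cnt st /\ List.In (LInvW w v) tr /\
      (forall t v', ~ List.In (LPut w t v') tr) /\
      uniq (map fst resp) /\ all (fun s => s < n) (map fst resp) /\
      (forall pre post v', tr = pre ++ LInvW w v' :: post ->
         forall c t vv, List.In (LPut (wi, c) t vv) tr -> DoneTag pre (OpW (wi, c)) t)
  | WPut w t acks => w.1 = wi /\ w.2 < w_cnt st /\ (exists v, List.In (LPut w t v) tr) /\
      uniq acks /\ all (fun s => s < n) acks /\ (forall s, s \in acks -> tag_le t (stag g s))
  end.

Definition RInv (tr : trace) (g : gst) ri :=
  let st := g_r g ri in
  (forall c v t, List.In (LRespR (ri, c) v t) tr -> c < r_cnt st) /\
  (forall c, List.In (LInvR (ri, c)) tr -> c < r_cnt st) /\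
  match r_ph st with
  | RIdle => True
  | RGet r resp => r.1 = ri /\ r.2 < r_cnt st /\ (forall v t, ~ List.In (LRespR r v t) tr) /\
      uniq (map fst resp) /\ all (fun s => s < n) (map fst resp)
  | RData r trr recv => r.1 = ri /\ r.2 < r_cnt st /\ (forall v t, ~ List.In (LRespR r v t) tr) /\
      (forall s t c, List.In (s, t, c) recv ->
         s < n /\ tag_le trr t /\ tag_le t (stag g s) /\ good_tc tr s t c)
  end.

Definition SInv (tr : trace) (g : gst) :=
  forall s, good_tc tr s (stag g s) (s_c (g_srv g s)) /\
            forall r x, (r, x) \in s_Rc (g_srv g s) -> rvOK g r x.

Definition TInv (tr : trace) :=
  (forall w t v t' v', List.In (LPut w t v) tr -> List.In (LPut w t' v') tr -> t = t' /\ v = v') /\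
  (forall w t v, List.In (LPut w t v) tr -> t.2 = w.1 /\ 0 < t.1) /\
  (forall w w' t v v', List.In (LPut w t v) tr -> List.In (LPut w' t v') tr -> w = w') /\
  (forall r v t v' t', List.In (LRespR r v t) tr -> List.In (LRespR r v' t') tr -> v = v' /\ t = t') /\
  (forall r v t, List.In (LRespR r v t) tr -> (t = t0 /\ v = v0) \/ exists w, List.In (LPut w t v) tr) /\
  (forall w, List.In (LRespW w) tr -> exists t v, List.In (LPut w t v) tr).

Definition Inv (tr : trace) (g : gst) :=
  TInv tr /\
  (forall o t, DoneTag tr o t -> exists Q, Qgood g t Q) /\
  (forall pre x post o2 o1 t1, tr = pre ++ x :: post -> is_inv o2 x -> DoneTag pre o1 t1 ->
        FRcond tr g o2 t1) /\
  (forall wi, WInv tr g wi) /\ (forall ri, RInv tr g ri) /\ SInv tr g /\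
  (forall src dst p, inflight g src dst p -> msgP tr g src dst p).

Lemma Inv_init : Inv [::] (init v0 Phi).
Proof.
split; [|split; [|split; [|split; [|split; [|split]]]]].
- by do !split => //.
- by move=> [w|r] t /= [].
- by move=> [|? ?].
- move=> wi; by do !split.
- move=> ri; by do !split.
- move=> s; split; [by left; split | by []].
- by move=> [?|?|?] dst p [].
Qed.


Definition quiet (l : lab) : bool := match l with LPut _ _ _ | LRespW _ | LRespR _ _ _ => false | _ => true end.

Lemma In_rcons_quiet (tr : trace) l x : quiet l -> ~~ quiet x ->
  List.In x (rcons tr l) <-> List.In x tr.
Proof.
move=> Hl Hx; rewrite In_rcons; split; [case=> // E | by left].
by move: Hx Hl; rewrite E => /negP.
Qed.

Lemma TInv_quiet tr l : quiet l -> TInv tr -> TInv (rcons tr l).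
Proof.
move=> Hl [T1 [T2 [T3 [T4 [T5 T6]]]]].
have E := (fun x Hx => @In_rcons_quiet tr l x Hl Hx).
split; [|split; [|split; [|split; [|split]]]].
- move=> w t v t' v'; rewrite !E //; exact: T1.
- move=> w t v; rewrite E //; exact: T2.
- move=> w w' t v v'; rewrite !E //; exact: T3.
- move=> r v t v' t'; rewrite !E //; exact: T4.
- move=> r v t; rewrite !E // => /T5 [H|[w Hw]]; [by left | right; exists w; by rewrite E].
- move=> w; rewrite E // => /T6 [t [v H]]; exists t, v; by rewrite E.
Qed.

Lemma DoneTag_quiet tr l o t : quiet l -> DoneTag (rcons tr l) o t -> DoneTag tr o t.
Proof.
move=> Hl; case: o => [w|r] /=.
- rewrite In_rcons_quiet // => -[H [v Hv]]; split => //; exists v; by rewrite In_rcons_quiet in Hv.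
- by move=> [v]; rewrite In_rcons_quiet // => H; exists v.
Qed.

Lemma DoneTag_mono tr l o t : DoneTag tr o t -> DoneTag (rcons tr l) o t.
Proof.
case: o => [w|r] /=.
- move=> [H [v Hv]]; split; first by rewrite In_rcons; left.
  by exists v; rewrite In_rcons; left.
- by move=> [v H]; exists v; rewrite In_rcons; left.
Qed.

Lemma good_tc_mono (tr tr' : trace) i t c : (forall x, List.In x tr -> List.In x tr') ->
  good_tc tr i t c -> good_tc tr' i t c.
Proof. move=> S [H|[w [v [H1 H2]]]]; [by left | right; exists w, v; split => //; exact: S]. Qed.

Lemma In_rcons_l (tr : trace) l x : List.In x tr -> List.In x (rcons tr l).
Proof. by rewrite In_rcons; left. Qed.

Definition Ext (g g' : gst) :=
  (forall s, tag_le (stag g s) (stag g' s)) /\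
  (forall wi, w_cnt (g_w g wi) <= w_cnt (g_w g' wi)) /\
  (forall ri, r_cnt (g_r g ri) <= r_cnt (g_r g' ri)) /\
  (forall r : rid, r.2 < r_cnt (g_r g r.1) -> (forall resp, r_ph (g_r g r.1) <> RGet r resp) ->
     (forall resp, r_ph (g_r g' r.1) <> RGet r resp) /\
     (forall trr recv, r_ph (g_r g' r.1) = RData r trr recv ->
        exists recv0, r_ph (g_r g r.1) = RData r trr recv0)).

Lemma rvOK_ext g g' r x : Ext g g' -> rvOK g r x -> rvOK g' r x.
Proof.
move=> [_ [_ [E3 E4]]] [H1 [H2 H3]]; have [F1 F2] := E4 r H1 H2.
split; [exact: leq_trans H1 (E3 _) | split => //].
by move=> trr recv /F2 [recv0 /H3].
Qed.

Lemma pcOK_ext (tr tr' : trace) g g' s r t c : (forall x, List.In x tr -> List.In x tr') ->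
  Ext g g' -> pcOK tr g s r t c -> pcOK tr' g' s r t c.
Proof.
move=> S [E1 [_ [E3 E4]]] [H1 [H2 [H3 [H4 H5]]]]; have [F1 F2] := E4 r H1 H2.
split; [exact: leq_trans H1 (E3 _) | split => //; split].
- by move=> trr recv /F2 [recv0 /H3].
- split; [exact: tag_le_trans H4 (E1 s) | exact: good_tc_mono H5].
Qed.

Lemma opfresh_ext g g' o : Ext g g' -> opfresh g o -> opfresh g' o.
Proof.
move=> [_ [E2 [E3 _]]]; case: o => [w|r] /= H; [exact: leq_trans H (E2 _) | exact: leq_trans H (E3 _)].
Qed.

Lemma Qgood_ext g g' t Q : Ext g g' -> Qgood g t Q -> Qgood g' t Q.
Proof.
move=> [E1 _] [H1 [H2 [H3 H4]]]; do 3 (split => //).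
move=> s /H4 H; exact: tag_le_trans H (E1 s).
Qed.

Lemma msgP_ext (tr tr' : trace) g g' src dst p : (forall x, List.In x tr -> List.In x tr') ->
  Ext g g' -> msgP tr g src dst p -> msgP tr' g' src dst p.
Proof.
move=> S E [B1 [B2 H]]; split => //; split => //.
case: p H => [o|o t|w t v|w t c|w|m|r t c] /=.
- exact: opfresh_ext.
- exact: opfresh_ext.
- exact: S.
- by move=> [i [v [H1 [H2 H3]]]]; exists i, v; split => //; split => //; exact: S.
- move=> [s [t [v [H1 [H2 H3]]]]]; exists s, t, v; split => //; split; first exact: S.
  by case: E => [E1 _]; exact: tag_le_trans H3 (E1 s).
- case: m => // r x; exact: rvOK_ext.
- move=> [s [H1 [H2 H3]]]; exists s; split => //; split => //; exact: pcOK_ext H3.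
Qed.

Lemma SInv_rc_ext tr g g' : Ext g g' -> SInv tr g ->
  (forall s, {subset s_Rc (g_srv g' s) <= s_Rc (g_srv g s)}) ->
  (forall s, good_tc tr s (stag g' s) (s_c (g_srv g' s))) -> SInv tr g'.
Proof.
move=> E HS Sub Hg s; split => // r x /Sub /(proj2 (HS s)); exact: rvOK_ext.
Qed.


Lemma In_to_servers lo cnt (p : pay) d q :
  List.In (d, q) (to_servers lo cnt p) -> q = p /\ exists i, d = Server i /\ lo <= i < lo + cnt.
Proof.
rewrite /to_servers => /List.in_map_iff [i [[<- <-] Hi]]; split => //; exists i; split => //.
have : i \in iota lo cnt by apply/InE.
by rewrite mem_iota.
Qed.


Lemma newtag_le_l (a tw : Defs.tag) : tag_le a (if tag_lt a tw then tw else a).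
Proof. case: ifP => H; [exact: tag_lt_le | exact: tag_le_refl]. Qed.

Lemma newtag_le_r (a tw : Defs.tag) : tag_le tw (if tag_lt a tw then tw else a).
Proof.
case: ifP => H; try exact: tag_le_refl.
case: (tag_total a tw) => [H'|[->|H']]; [by rewrite H' in H | exact: tag_le_refl | exact: tag_lt_le].
Qed.

Lemma srv_bound (g' : gst) tr s d (q : pay) :
  s < n -> (forall i, d = Server i -> i < n) ->
  (match q return Prop with
  | PTagQuery o => opfresh g' o
  | PTagResp o _ => opfresh g' o
  | PValFull w t v => List.In (LPut w t v) tr
  | PValCoded w t c => exists i v, d = Server i /\ List.In (LPut w t v) tr /\ c = Phi i v
  | PAck w => exists s0 t v, Server s = Server s0 /\ List.In (LPut w t v) tr /\ tag_le t (stag g' s0)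
  | PMeta (ReadValue r x) => rvOK g' r x
  | PMeta _ => True
  | PCoded r t c => exists s0, Server s = Server s0 /\ d = Reader r.1 /\ pcOK tr g' s0 r t c
  end) -> msgP tr g' (Server s) d q.
Proof. move=> Hs Hd H; split; [by move=> ? [<-] | by split]. Qed.

Lemma md_meta_ok (g' : gst) tr s m d q : s < n -> f < n ->
  (match m with ReadValue r x => rvOK g' r x | _ => True end) ->
  List.In (d, q) (md_meta_send V C f m) -> msgP tr g' (Server s) d q /\ (forall o t, q <> PTagResp o t).
Proof.
move=> Hs Hfn Hm /In_to_servers [-> [i [-> Hi]]]; split => //.
apply: srv_bound => //; try by case: m Hm.
move=> j [<-]; lia.
Qed.

Lemma vd_ok tr (g' : gst) s w tw v c' L (st0 : sstate V C) :
  s < n -> f < n -> List.In (LPut w tw v) tr -> c' = Phi s v ->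
  (forall x, x \in L -> rvOK g' x.1 x.2 /\ tag_le x.2 tw) ->
  stag g' s = s_tag (srv_value_deliver f s w tw c' L st0) ->
  [/\ tag_le (s_tag st0) (s_tag (srv_value_deliver f s w tw c' L st0)),
      good_tc tr s (s_tag st0) (s_c st0) -> good_tc tr s (s_tag (srv_value_deliver f s w tw c' L st0))
                      (s_c (srv_value_deliver f s w tw c' L st0)),
      s_Rc (srv_value_deliver f s w tw c' L st0) = s_Rc st0 &
      exists nw, s_out (srv_value_deliver f s w tw c' L st0) = s_out st0 ++ nw /\
        forall d q, List.In (d, q) nw -> msgP tr g' (Server s) d q /\
           (forall o t, q <> PTagResp o t)].
Proof.
move=> Hs Hfn Hput Hc HL Htag; rewrite /srv_value_deliver /= in Htag *.
split => //.
- exact: newtag_le_l.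
- case: ifP => // _ _; right; exists w, v; by split.
- eexists; split; first reflexivity.
  move=> d q H; case: (In_app H) => {H} H.
  - have [x [/InE Hx]] := In_flatten_map H.
    case=> [[<- <-]|Hm]; last by apply: (@md_meta_ok g' tr s (ReadDisperse tw s x.1)).
    split => //; apply: srv_bound => //; exists s; split => //; split => //.
    have [[H1 [H2 H3]] H4] := HL x Hx.
    split => //; split => //; split; first by move=> trr recv /H3 <-.
    split; first by rewrite Htag; exact: newtag_le_r.
    right; exists w, v; by split.
  - case: H => [[<- <-]|//].
    split => //; apply: srv_bound => //; exists s, tw, v; split => //; split => //.
    rewrite Htag; exact: newtag_le_r.
Qed.


Lemma mem_sadd (T : eqType) (x y : T) l : x \in sadd y l -> x = y \/ x \in l.
Proof.
rewrite /sadd; case: ifP => _ H; first by right.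
by move: H; rewrite mem_rcons inE => /orP [/eqP ->|H]; [left | right].
Qed.

Lemma fwd_meta_ok s (m : meta) d (q : pay) : f < n -> List.In (d, q) (@fwd_meta V C n f s m) ->
  q = PMeta m /\ forall i, d = Server i -> i < n.
Proof.
move=> Hfn; rewrite /fwd_meta; case: ifP => Hs //= H.
case: (In_app H) => /In_to_servers [-> [i [-> Hi]]]; split => // j [<-]; lia.
Qed.

Lemma fwd_value_ok tr (g' : gst) s w t v d q : f < n -> s < n -> List.In (LPut w t v) tr ->
  List.In (d, q) (fwd_value n f Phi s w t v) -> msgP tr g' (Server s) d q /\ (forall o t, q <> PTagResp o t).
Proof.
move=> Hfn Hs Hput; rewrite /fwd_value; case: ifP => Hsf //= H.
case: (In_app H) => {H} H.
- move/In_to_servers: H => [-> [i [-> Hi]]]; split => //; apply: srv_bound => //.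
  move=> j [<-]; lia.
- move/List.in_map_iff: H => [i [[<- <-] /InE]]; rewrite mem_iota => Hi.
  split => //; apply: srv_bound => //; first by move=> j [<-]; lia.
  by exists i, v.
Qed.

Lemma meta_deliver_tag s m (st0 : sstate V C) : s_tag (srv_meta_deliver n f s m st0) = s_tag st0.
Proof. by case: m => [r x|r x|t s1 r] /=; repeat case: ifP. Qed.

Lemma srv_recv_ok tr (g g' : gst) src s (p : pay) st' :
  f < n ->
  msgP tr g src (Server s) p ->
  good_tc tr s (stag g s) (s_c (g_srv g s)) ->
  (forall r x, (r, x) \in s_Rc (g_srv g s) -> rvOK g r x) ->
  srv_recv n f Phi s p (g_srv g s) st' ->
  g_w g' = g_w g -> g_r g' = g_r g -> stag g' s = s_tag st' ->
  [/\ tag_le (stag g s) (s_tag st'),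
      good_tc tr s (s_tag st') (s_c st'),
      (forall r x, (r, x) \in s_Rc st' -> rvOK g r x) &
      exists nw, s_out st' = s_out (g_srv g s) ++ nw /\
        forall d q, List.In (d, q) nw -> msgP tr g' (Server s) d q /\
           (forall o t, q = PTagResp o t -> t = s_tag st')].
Proof.
move=> Hfn [_ [Hs' HM]] Hgood HRc HR Hw Hr Htag.
have Hs : s < n by exact: Hs'.
have rvE : forall r x, rvOK g r x -> rvOK g' r x by move=> r x; rewrite /rvOK Hr.
rewrite /stag in Hgood *.
case: HR Hgood HRc HM Htag.
-
  move=> o st Hgood HRc HM Htag; split => //; try exact: tag_le_refl.
  exists [:: (client_of o, PTagResp o (s_tag st))]; split => //.
  move=> d q [[<- <-]|//]; split; last by move=> o' t' [_ <-].
  apply: srv_bound => //; first by case: o {HM Htag}.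
  by move: HM; case: (o) => [w|r]; rewrite /opfresh ?Hw ?Hr.
- move=> w t v st _ Hgood HRc _ _; split => //; try exact: tag_le_refl.
  by exists [::]; rewrite cats0.
- move=> w t v L st _ HL Hgood HRc HM Htag.
  set st0 := s_add_dval _ _.
  have HL' : forall x, x \in L -> rvOK g' x.1 x.2 /\ tag_le x.2 t.
    move=> [r x]; rewrite (perm_mem HL) mem_filter => /andP [H1 H2]; split => //.
    exact: rvE (HRc _ _ H2).
  have [A1 A2 A3 [nw [A4 A5]]] := @vd_ok tr g' s w t v (Phi s v) L st0 Hs Hfn HM erefl HL' Htag.
  split => //; first exact: A2.
  exists (fwd_value n f Phi s w t v ++ nw); rewrite A4 /= catA; split => //.
  move=> d q H; case: (In_app H) => {H} H.
  + have [B1 B2] := fwd_value_ok g' Hfn Hs HM H; split => // o t' E; by case: (B2 o t').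
  + have [B1 B2] := A5 d q H; split => // o t' E; by case: (B2 o t').
- move=> w t c st _ Hgood HRc _ _; split => //; try exact: tag_le_refl.
  by exists [::]; rewrite cats0.
- move=> w t c L st _ HL Hgood HRc HM Htag.
  move: HM => [i [v [[<-] [Hput ->]]]].
  have HL' : forall x, x \in L -> rvOK g' x.1 x.2 /\ tag_le x.2 t.
    move=> [r x]; rewrite (perm_mem HL) mem_filter => /andP [H1 H2]; split => //.
    exact: rvE (HRc _ _ H2).
  have [A1 A2 A3 [nw [A4 A5]]] := @vd_ok tr g' s w t v (Phi s v) L (s_add_dval w st) Hs Hfn Hput erefl HL' Htag.
  split => //; first exact: A2.
  exists nw; rewrite A4; split => //.
  move=> d q H; have [B1 B2] := A5 d q H; split => // o t' E; by case: (B2 o t').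
- move=> m st _ Hgood HRc _ _; split => //; try exact: tag_le_refl.
  by exists [::]; rewrite cats0.
- move=> m st _ Hgood HRc HM Htag.
  have Hfw : forall d q, List.In (d, q) (@fwd_meta V C n f s m) ->
      msgP tr g' (Server s) d q /\ (forall o t, q = PTagResp o t -> t = s_tag st).
    move=> d q /(fwd_meta_ok Hfn) [-> Hd]; split => //.
    apply: srv_bound => //; case: (m) HM => //= r x; exact: rvE.
  rewrite meta_deliver_tag /= in Htag.
  case: m HM Htag Hfw => [r x|r x|t s1 r] HM Htag Hfw; rewrite /srv_meta_deliver /=.
  + case: ifP => _ /=.
    * split => //; try exact: tag_le_refl.
      exists (@fwd_meta V C n f s (ReadValue r x)); split => //.
    * have HRc' : forall r0 x0, (r0, x0) \in sadd (r, x) (s_Rc st) -> rvOK g r0 x0.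
        by move=> r0 x0 /mem_sadd [[-> ->]|/HRc].
      case: ifP => Hle /=.
      -- split => //; try exact: tag_le_refl.
         eexists; split; first by rewrite -catA.
         move=> d q H; case: (In_app H) => {H} H; first exact: Hfw.
         case: H => [[<- <-]|H].
         ++ split => //; apply: srv_bound => //; exists s; split => //; split => //.
            move: HM => [H1 [H2 H3]]; rewrite /pcOK Hr Htag /=.
            do 2 (split => //); split; first by move=> trr recv /H3 <-.
            by split; try exact: tag_le_refl.
         ++ have [B1 B2] := @md_meta_ok g' tr s (ReadDisperse (s_tag st) s r) d q Hs Hfn I H.
            split => // o t' E; by case: (B2 o t').
      -- split => //; try exact: tag_le_refl.
         by exists (@fwd_meta V C n f s (ReadValue r x)).
  + case: ifP => _ /=; (split => //; try exact: tag_le_refl).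
    * by move=> r0 x0; rewrite mem_filter => /andP [_ /HRc].
    * by exists (@fwd_meta V C n f s (ReadComplete r x)).
    * by exists (@fwd_meta V C n f s (ReadComplete r x)).
  + case: ifP => _ /=; (split => //; try exact: tag_le_refl).
    * by move=> r0 x0; rewrite mem_filter => /andP [_ /HRc].
    * by exists (@fwd_meta V C n f s (ReadDisperse t s1 r)).
    * by exists (@fwd_meta V C n f s (ReadDisperse t s1 r)).
Qed.


Definition RespCond (g g' : gst) :=
  forall s dst o t, inflight g' (Server s) dst (PTagResp o t) ->
    inflight g (Server s) dst (PTagResp o t) \/ tag_le (stag g' s) t.

Lemma GetOK_ext g g' Q o resp t1 : Ext g g' -> RespCond g g' ->
  GetOK g Q o resp t1 -> GetOK g' Q o resp t1.
Proof.
move=> E RC [H1 [H2 H3]]; have H1' := Qgood_ext E H1; split => //; split => //.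
move=> s dst t /RC [H|H] Hs; first exact: H3 H Hs.
move: H1' => [_ [_ [_ H4]]]; exact: tag_le_trans (H4 s Hs) H.
Qed.

Definition aboutW (wi : nat) (l : lab) : bool :=
  match l with LInvW w _ | LPut w _ _ | LRespW w => w.1 == wi | _ => false end.
Definition aboutR (ri : nat) (l : lab) : bool :=
  match l with LInvR r | LRespR r _ _ => r.1 == ri | _ => false end.

Lemma WInv_frame tr g g' l wi : Ext g g' -> ~~ aboutW wi l ->
  w_cnt (g_w g' wi) = w_cnt (g_w g wi) -> w_ph (g_w g' wi) = w_ph (g_w g wi) ->
  WInv tr g wi -> WInv (rcons tr l) g' wi.
Proof.
move=> [E1 _] Hl Ec Ep [W1 [W2 W3]]; rewrite /WInv Ec Ep.
have NI : forall x, aboutW wi x -> List.In x (rcons tr l) -> List.In x tr.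
  move=> x Hx; rewrite In_rcons => -[//|E]; by move: Hl; rewrite -E Hx.
split; [|split].
- move=> c v /NI H; apply: W1; apply: H; exact: eqxx.
- move=> c t v /NI H; have [H1 H2] := W2 c t v (H (eqxx _)); split => //.
  case: H2 => [H2|H2]; [by left | right; exact: In_rcons_l].
- case: (w_ph (g_w g wi)) W3 => // [w v resp|w t acks].
  + move=> [A1 [A2 [A3 [A4 [A5 [A6 A7]]]]]].
    do 2 (split => //); split; first exact: In_rcons_l.
    split; first by move=> t v' /NI H; apply: (A4 t v'); apply: H; rewrite /= A1.
    do 2 (split => //).
    move=> pre post v' Ed; case: (decomp_rcons Ed) => [[_ [El _]]|[post' [_ Etr]]].
    * by move: Hl; rewrite -El /= A1 eqxx.
    * move=> c t vv /NI H; apply: (A7 pre post' v' Etr); apply: H; exact: eqxx.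
  + move=> [A1 [A2 [[v A3] [A4 [A5 A6]]]]].
    do 2 (split => //); split; first by exists v; exact: In_rcons_l.
    do 2 (split => //).
    move=> s /A6 H; exact: tag_le_trans H (E1 s).
Qed.

Lemma RInv_frame tr tr' g g' ri : Ext g g' ->
  (forall x, aboutR ri x -> List.In x tr' -> List.In x tr) -> (forall x, List.In x tr -> List.In x tr') ->
  r_cnt (g_r g' ri) = r_cnt (g_r g ri) -> r_ph (g_r g' ri) = r_ph (g_r g ri) ->
  RInv tr g ri -> RInv tr' g' ri.
Proof.
move=> [E1 _] NI Sub Ec Ep [R1 [R2 R3]]; rewrite /RInv Ec Ep.
split; [|split].
- move=> c v t /NI H; apply: R1; apply: H; exact: eqxx.
- move=> c /NI H; apply: R2; apply: H; exact: eqxx.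
- case: (r_ph (g_r g ri)) R3 => // [r resp|r trr recv].
  + move=> [A1 [A2 [A3 A4]]]; do 2 (split => //); split => // v t /NI H.
    apply: (A3 v t); apply: H; by rewrite /= A1.
  + move=> [A1 [A2 [A3 A4]]]; do 2 (split => //); split.
    * move=> v t /NI H; apply: (A3 v t); apply: H; by rewrite /= A1.
    * move=> s t c /A4 [B1 [B2 [B3 B4]]]; do 2 (split => //); split.
      -- exact: tag_le_trans B3 (E1 s).
      -- exact: good_tc_mono B4.
Qed.

Lemma FRcond_frame tr g g' l o2 t1 : Ext g g' -> RespCond g g' ->
  (forall w, o2 = OpW w -> w_ph (g_w g' w.1) = w_ph (g_w g w.1) /\ forall t v, l <> LPut w t v) ->
  (forall r, o2 = OpR r -> r_ph (g_r g' r.1) = r_ph (g_r g r.1) /\ forall v t, l <> LRespR r v t) ->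
  FRcond tr g o2 t1 -> FRcond (rcons tr l) g' o2 t1.
Proof.
move=> E RC; case: o2 => [w|r] HW HR /=.
- have [Ep Hl] := HW w erefl; move=> [F1 F2]; split.
  + move=> t2 v2; rewrite In_rcons => -[H|H]; [exact: F1 H | by case: (Hl t2 v2)].
  + move=> v resp; rewrite Ep => /F2 [Q HQ]; exists Q; exact: GetOK_ext HQ.
- have [Ep Hl] := HR r erefl; move=> [F1 [F2 F3]]; split; [|split].
  + move=> v2 t2; rewrite In_rcons => -[H|H]; [exact: F1 H | by case: (Hl v2 t2)].
  + move=> resp; rewrite Ep => /F2 [Q HQ]; exists Q; exact: GetOK_ext HQ.
  + move=> trr recv; rewrite Ep; exact: F3.
Qed.


Lemma Ext_refl g : Ext g g.
Proof.
split; [by move=> s; exact: tag_le_refl | split; [by [] | split; [by [] |]]].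
move=> r _ H; split => // trr recv ->; by exists recv.
Qed.

Lemma NI_tau (tr : trace) x : List.In x (rcons tr LTau) -> x <> LTau -> List.In x tr.
Proof. by rewrite In_rcons => -[]. Qed.

Lemma quiet_frame tr g g' :
  Inv tr g ->
  (forall s, tag_le (stag g s) (stag g' s)) ->
  (forall wi, w_cnt (g_w g' wi) = w_cnt (g_w g wi) /\ w_ph (g_w g' wi) = w_ph (g_w g wi)) ->
  (forall ri, r_cnt (g_r g' ri) = r_cnt (g_r g ri) /\ r_ph (g_r g' ri) = r_ph (g_r g ri)) ->
  (forall src dst p, inflight g' src dst p -> inflight g src dst p \/
      (msgP tr g' src dst p /\ forall s o t, src = Server s -> p = PTagResp o t -> tag_le (stag g' s) t)) ->
  (forall s, good_tc tr s (stag g' s) (s_c (g_srv g' s))) ->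
  (forall s r x, (r, x) \in s_Rc (g_srv g' s) -> rvOK g r x) ->
  Inv (rcons tr LTau) g'.
Proof.
move=> [HT [HQ [HFR [HW [HR [HS HM]]]]]] Htag Hw Hr Hm Hgood HRc.
have E : Ext g g'.
  split => //; split; first by move=> wi; rewrite (proj1 (Hw wi)).
  split; first by move=> ri; rewrite (proj1 (Hr ri)).
  move=> r H1 H2; rewrite (proj2 (Hr r.1)); split => // trr recv ->; by exists recv.
have RC : RespCond g g'.
  move=> s dst o t /Hm [H|[_ H]]; [by left | right; exact: H s o t erefl erefl].
have Sub := @In_rcons_l tr LTau.
split; [|split; [|split; [|split; [|split; [|split]]]]].
- exact: TInv_quiet.
- move=> o t /(DoneTag_quiet (l := LTau) isT) /HQ [Q HQ']; exists Q; exact: Qgood_ext HQ'.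
- move=> pre x post o2 o1 t1 Ed Hinv Hd; case: (decomp_rcons Ed) => [[_ [Ex _]]|[post' [_ Etr]]].
  + by move: Hinv; rewrite Ex; case: o2.
  + apply: FRcond_frame (HFR _ _ _ _ _ _ Etr Hinv Hd) => //.
    * by move=> w _; split; [exact: (proj2 (Hw _)) | done].
    * by move=> r _; split; [exact: (proj2 (Hr _)) | done].
- move=> wi; exact: (WInv_frame E _ (proj1 (Hw wi)) (proj2 (Hw wi)) (HW wi)).
- move=> ri; apply: (RInv_frame E _ Sub (proj1 (Hr ri)) (proj2 (Hr ri)) (HR ri)).
  move=> x Hx /NI_tau; apply; by move=> Ex; rewrite Ex in Hx.
- move=> s; split; first exact: good_tc_mono (Hgood s).
  move=> r x /HRc; exact: rvOK_ext.
- move=> src dst p /Hm [H|[H _]].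
  + exact: msgP_ext (HM _ _ _ H).
  + exact: msgP_ext (Ext_refl g') H.
Qed.


Lemma step_send_srv tr g s dst p rest :
  Inv tr g -> s_out (g_srv g s) = (dst, p) :: rest ->
  Inv (rcons tr LTau) (g_set_net (g_set_srv g s (s_set_out rest (g_srv g s))) (rcons (g_net g) (Server s, dst, p))).
Proof.
move=> I Hout; have I' := I; move: I' => [_ [_ [_ [_ [_ [HS HM]]]]]].
apply: (quiet_frame I) => //.
- move=> j; rewrite /stag /= /upd; case: eqP => [->|_] /=; exact: tag_le_refl.
- move=> src d q; left; move: H; rewrite /inflight /= In_rcons => -[[H|[->]]|H].
  + by left.
  + move=> -> ->; right; rewrite Hout; by left.
  + right; case: src H => // j; rewrite /upd; case: eqP => [->|_] //= H; rewrite Hout; by right.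
- move=> j; rewrite /stag /= /upd; case: eqP => [Ej|_] /=; [subst j|]; exact: (proj1 (HS _)).
- move=> j r x; rewrite /= /upd; case: eqP => [Ej|_] /=; [subst j|]; exact: (proj2 (HS _)).
Qed.


Lemma step_send_w tr g wi dst p rest :
  Inv tr g -> w_out (g_w g wi) = (dst, p) :: rest ->
  Inv (rcons tr LTau) (g_set_net (g_set_w g wi (w_set (w_cnt (g_w g wi)) (w_ph (g_w g wi)) rest (g_w g wi)))
                           (rcons (g_net g) (Writer wi, dst, p))).
Proof.
move=> I Hout; have I' := I; move: I' => [_ [_ [_ [_ [_ [HS HM]]]]]].
apply: (quiet_frame I) => //.
- move=> j; exact: tag_le_refl.
- move=> j; rewrite /= /upd; case: eqP => [Ej|_] /=; [subst j|]; by [].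
- move=> src d q; left; move: H; rewrite /inflight /= In_rcons => -[[H|[->]]|H].
  + by left.
  + move=> -> ->; right; rewrite Hout; by left.
  + right; case: src H => // j; rewrite /upd; case: eqP => [->|_] //= H; rewrite Hout; by right.
- move=> j; exact: (proj1 (HS _)).
- move=> j r x; exact: (proj2 (HS _)).
Qed.

Lemma step_send_r tr g ri dst p rest :
  Inv tr g -> r_out (g_r g ri) = (dst, p) :: rest ->
  Inv (rcons tr LTau) (g_set_net (g_set_r g ri (r_set (r_cnt (g_r g ri)) (r_ph (g_r g ri)) rest (g_r g ri)))
                           (rcons (g_net g) (Reader ri, dst, p))).
Proof.
move=> I Hout; have I' := I; move: I' => [_ [_ [_ [_ [_ [HS HM]]]]]].
apply: (quiet_frame I) => //.
- move=> j; exact: tag_le_refl.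
- move=> j; rewrite /= /upd; case: eqP => [Ej|_] /=; [subst j|]; by [].
- move=> src d q; left; move: H; rewrite /inflight /= In_rcons => -[[H|[->]]|H].
  + by left.
  + move=> -> ->; right; rewrite Hout; by left.
  + right; case: src H => // j; rewrite /upd; case: eqP => [->|_] //= H; rewrite Hout; by right.
- move=> j; exact: (proj1 (HS _)).
- move=> j r x; exact: (proj2 (HS _)).
Qed.

Lemma step_crash_srv tr g s :
  Inv tr g -> Inv (rcons tr LTau) (g_set_srv g s (s_crash (g_srv g s))).
Proof.
move=> I; have I' := I; move: I' => [_ [_ [_ [_ [_ [HS HM]]]]]].
apply: (quiet_frame I) => //.
- move=> j; rewrite /stag /= /upd; case: eqP => [->|_] /=; exact: tag_le_refl.
- move=> src d q H; left; move: H; rewrite /inflight /= => -[H|H]; first by left.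
  right; case: src H => // j; rewrite /upd; case: eqP => [->|_] //.
- move=> j; rewrite /stag /= /upd; case: eqP => [Ej|_] /=; [subst j|]; exact: (proj1 (HS _)).
- move=> j r x; rewrite /= /upd; case: eqP => [Ej|_] /=; [subst j|]; exact: (proj2 (HS _)).
Qed.

Lemma step_crash_w tr g wi :
  Inv tr g -> Inv (rcons tr LTau) (g_set_w g wi (WState (w_cnt (g_w g wi)) (w_ph (g_w g wi)) true (w_out (g_w g wi)))).
Proof.
move=> I; have I' := I; move: I' => [_ [_ [_ [_ [_ [HS HM]]]]]].
apply: (quiet_frame I) => //.
- move=> j; exact: tag_le_refl.
- move=> j; rewrite /= /upd; case: eqP => [Ej|_] /=; [subst j|]; by [].
- move=> src d q H; left; move: H; rewrite /inflight /= => -[H|H]; first by left.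
  right; case: src H => // j; rewrite /upd; case: eqP => [->|_] //.
- move=> j; exact: (proj1 (HS _)).
- move=> j r x; exact: (proj2 (HS _)).
Qed.

Lemma step_crash_r tr g ri :
  Inv tr g -> Inv (rcons tr LTau) (g_set_r g ri (RState (r_cnt (g_r g ri)) (r_ph (g_r g ri)) true (r_out (g_r g ri)))).
Proof.
move=> I; have I' := I; move: I' => [_ [_ [_ [_ [_ [HS HM]]]]]].
apply: (quiet_frame I) => //.
- move=> j; exact: tag_le_refl.
- move=> j; rewrite /= /upd; case: eqP => [Ej|_] /=; [subst j|]; by [].
- move=> src d q H; left; move: H; rewrite /inflight /= => -[H|H]; first by left.
  right; case: src H => // j; rewrite /upd; case: eqP => [->|_] //.
- move=> j; exact: (proj1 (HS _)).
- move=> j r x; exact: (proj2 (HS _)).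
Qed.


Lemma In_n1n2 (T : Type) (x y : T) n1 n2 : List.In x (n1 ++ n2) -> List.In x (n1 ++ y :: n2).
Proof.
move=> H; case: (In_app H) => {}H; apply: List.in_or_app; [by left | right; by right].
Qed.

Lemma step_recv_srv tr g n1 n2 src s p st' :
  f < n -> Inv tr g -> g_net g = n1 ++ (src, Server s, p) :: n2 ->
  srv_recv n f Phi s p (g_srv g s) st' ->
  Inv (rcons tr LTau) (g_set_net (g_set_srv g s st') (n1 ++ n2)).
Proof.
move=> Hfn I Hnet HR; have I' := I; move: I' => [_ [_ [_ [_ [_ [HS HM]]]]]].
set g' := g_set_net _ _.
have Hin : inflight g src (Server s) p.
  left; rewrite Hnet; apply: List.in_or_app; right; by left.
have Htag : stag g' s = s_tag st' by rewrite /stag /= /upd eqxx.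
have [A1 A2 A3 [nw [A4 A5]]] :=
  @srv_recv_ok tr g g' src s p st' Hfn (HM _ _ _ Hin) (proj1 (HS s)) (proj2 (HS s)) HR erefl erefl Htag.
apply: (quiet_frame I) => //.
- move=> j; rewrite /stag /= /upd; case: eqP => [Ej|_] /=; [subst j; exact: A1 | exact: tag_le_refl].
- move=> src' d q [H|H].
  + left; left; rewrite Hnet; exact: In_n1n2.
  + case: src' H => [j|j|j] H; try by left; right.
    move: H; rewrite /= /upd; case: eqP => [Ej|_] H; last by left; right.
    subst j; rewrite A4 in H; case: (In_app H) => {}H; first by left; right.
    right; have [B1 B2] := A5 d q H; split => // s0 o t [<-] E.
    by rewrite Htag (B2 o t E); exact: tag_le_refl.
- move=> j; rewrite /stag /= /upd; case: eqP => [Ej|_] /=; [subst j; exact: A2 | exact: (proj1 (HS _))].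
- move=> j r x; rewrite /= /upd; case: eqP => [Ej|_] /=; [subst j; exact: A3 | exact: (proj2 (HS _))].
Qed.


Lemma writer_common tr g (l : lab) wi st' net' :
  let g' := g_set_net (g_set_w g wi st') net' in
  Inv tr g ->
  w_cnt (g_w g wi) <= w_cnt st' ->
  (l = LTau \/ aboutW wi l) ->
  (forall x, List.In x net' -> List.In x (g_net g)) ->
  (forall d q, List.In (d, q) (w_out st') -> List.In (d, q) (w_out (g_w g wi)) \/ msgP (rcons tr l) g' (Writer wi) d q) ->
  TInv (rcons tr l) ->
  (forall o t, DoneTag (rcons tr l) o t -> DoneTag tr o t \/ exists Q, Qgood g' t Q) ->
  (forall pre x post w o1 t1, rcons tr l = pre ++ x :: post -> is_inv (OpW w) x -> w.1 = wi ->
      DoneTag pre o1 t1 -> FRcond (rcons tr l) g' (OpW w) t1) ->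
  WInv (rcons tr l) g' wi ->
  Inv (rcons tr l) g'.
Proof.
move=> g' [HT [HQ [HFR [HW [HR [HS HM]]]]]] Hcnt Hl Hnet Hout HT' HQ' HFR' HW'.
have Ew : forall j, j != wi -> g_w g' j = g_w g j by move=> j /negbTE Hj; rewrite /g' /= /upd Hj.
have E : Ext g g'.
  split; first by move=> s; exact: tag_le_refl.
  split; first by move=> j; rewrite /g' /= /upd; case: eqP => [->|_].
  split => //; move=> r H1 H2; split => // trr recv ->; by exists recv.
have RC : RespCond g g'.
  move=> s dst o t [H|H]; left; [left; exact: Hnet | by right].
have Sub := @In_rcons_l tr l.
have NR : forall ri x, aboutR ri x -> List.In x (rcons tr l) -> List.In x tr.
  move=> ri x Hx; rewrite In_rcons => -[//|Ex]; subst x.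
  by case: Hl => [El|]; [rewrite El in Hx | case: (l) Hx].
split; [|split; [|split; [|split; [|split; [|split]]]]] => //.
- move=> o t /HQ' [/HQ [Q HQ0]|//]; exists Q; exact: Qgood_ext HQ0.
- move=> pre x post o2 o1 t1 Ed Hinv Hd.
  case: o2 Hinv => [w|r] Hinv.
  + case: (w.1 =P wi) => [Ew1|Nw1]; first exact: HFR' Ed Hinv Ew1 Hd.
    case: (decomp_rcons Ed) => [[_ [Ex _]]|[post' [_ Etr]]].
    * subst x; exfalso; apply: Nw1; case: Hl Hinv => [->|] //; case: (l) => //= w' v' H1 H2; subst w'; exact/eqP.
    * apply: FRcond_frame (HFR _ _ _ _ _ _ Etr Hinv Hd) => //.
      move=> w0 [<-]; rewrite Ew; last by apply/eqP.
      split => // t v El; move: Hl; rewrite El => -[E0|/eqP]; [discriminate | exact: Nw1].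
  + case: (decomp_rcons Ed) => [[_ [Ex _]]|[post' [_ Etr]]].
    * subst x; by case: Hl Hinv => [->|] //; case: (l).
    * apply: FRcond_frame (HFR _ _ _ _ _ _ Etr Hinv Hd) => //.
      move=> r0 [<-]; split => // v t El; case: Hl => [//|]; by rewrite El.
- move=> j; case: (j =P wi) => [->|Nj] //.
  apply: (WInv_frame E); last exact: HW.
  + case: Hl => [->//|Ha]; apply/negP => Hb; apply: Nj; move: Ha Hb.
    by case: (l) => //= [w v|w t v|w] /eqP -> /eqP ->.
  + by rewrite Ew //; apply/eqP.
  + by rewrite Ew //; apply/eqP.
- move=> ri; exact: (RInv_frame E (NR ri) Sub erefl erefl (HR ri)).
- move=> s; split; first exact: good_tc_mono (proj1 (HS s)).
  move=> r x /(proj2 (HS s)); exact: rvOK_ext.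
- move=> src dst p [H|H].
  + apply: msgP_ext (HM src dst p _) => //; left; exact: Hnet.
  + case: src H => [j|j|j] H; try by apply: msgP_ext (HM _ dst p _) => //; right.
    move: H; rewrite /g' /= /upd; case: eqP => [Ej|Nj] H; last by apply: msgP_ext (HM _ dst p _) => //; right.
    subst j; case: (Hout _ _ H) => // H'; apply: msgP_ext (HM _ dst p _) => //; by right.
Qed.


Lemma reader_common tr g (l : lab) ri st' net' :
  let g' := g_set_net (g_set_r g ri st') net' in
  Inv tr g ->
  r_cnt (g_r g ri) <= r_cnt st' ->
  (forall r : rid, r.2 < r_cnt (g_r g r.1) -> (forall resp, r_ph (g_r g r.1) <> RGet r resp) ->
     (forall resp, r_ph (g_r g' r.1) <> RGet r resp) /\
     (forall trr recv, r_ph (g_r g' r.1) = RData r trr recv ->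
        exists recv0, r_ph (g_r g r.1) = RData r trr recv0)) ->
  (l = LTau \/ aboutR ri l) ->
  (forall x, List.In x net' -> List.In x (g_net g)) ->
  (forall d q, List.In (d, q) (r_out st') -> List.In (d, q) (r_out (g_r g ri)) \/ msgP (rcons tr l) g' (Reader ri) d q) ->
  TInv (rcons tr l) ->
  (forall o t, DoneTag (rcons tr l) o t -> DoneTag tr o t \/ exists Q, Qgood g' t Q) ->
  (forall pre x post r o1 t1, rcons tr l = pre ++ x :: post -> is_inv (OpR r) x -> r.1 = ri ->
      DoneTag pre o1 t1 -> FRcond (rcons tr l) g' (OpR r) t1) ->
  RInv (rcons tr l) g' ri ->
  Inv (rcons tr l) g'.
Proof.
move=> g' [HT [HQ [HFR [HW [HR [HS HM]]]]]] Hcnt HE4 Hl Hnet Hout HT' HQ' HFR' HR'.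
have Er : forall j, j != ri -> g_r g' j = g_r g j by move=> j /negbTE Hj; rewrite /g' /= /upd Hj.
have E : Ext g g'.
  split; first by move=> s; exact: tag_le_refl.
  split => //; split => //; by move=> j; rewrite /g' /= /upd; case: eqP => [->|_].
have RC : RespCond g g'.
  move=> s dst o t [H|H]; left; [left; exact: Hnet | by right].
have Sub := @In_rcons_l tr l.
split; [|split; [|split; [|split; [|split; [|split]]]]] => //.
- move=> o t /HQ' [/HQ [Q HQ0]|//]; exists Q; exact: Qgood_ext HQ0.
- move=> pre x post o2 o1 t1 Ed Hinv Hd.
  case: o2 Hinv => [w|r] Hinv.
  + case: (decomp_rcons Ed) => [[_ [Ex _]]|[post' [_ Etr]]].
    * subst x; by case: Hl Hinv => [->|] //; case: (l).
    * apply: FRcond_frame (HFR _ _ _ _ _ _ Etr Hinv Hd) => //.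
      move=> w0 [<-]; split => // t v El; move: Hl; rewrite El => -[E0|E0]; discriminate.
  + case: (r.1 =P ri) => [Er1|Nr1]; first exact: HFR' Ed Hinv Er1 Hd.
    case: (decomp_rcons Ed) => [[_ [Ex _]]|[post' [_ Etr]]].
    * subst x; exfalso; apply: Nr1; case: Hl Hinv => [->|] //; case: (l) => //= r' H1 H2; subst r'; exact/eqP.
    * apply: FRcond_frame (HFR _ _ _ _ _ _ Etr Hinv Hd) => //.
      move=> r0 [<-]; rewrite Er; last by apply/eqP.
      split => // v t El; move: Hl; rewrite El => -[E0|/eqP]; [discriminate | exact: Nr1].
- move=> j; apply: (WInv_frame E); last exact: HW.
  + by case: Hl => [->|]; case: (l).
  + by [].
  + by [].
- move=> j; case: (j =P ri) => [->|Nj] //.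
  apply: (RInv_frame E); last exact: HR.
  + move=> x Hx; rewrite In_rcons => -[//|Ex]; subst x; exfalso; apply: Nj.
    by case: Hl Hx => [->|] //; case: (l) => //= [r|r v t] /eqP -> /eqP ->.
  + exact: Sub.
  + by rewrite Er //; apply/eqP.
  + by rewrite Er //; apply/eqP.
- move=> s; split; first exact: good_tc_mono (proj1 (HS s)).
  move=> r x /(proj2 (HS s)); exact: rvOK_ext.
- move=> src dst p [H|H].
  + apply: msgP_ext (HM src dst p _) => //; left; exact: Hnet.
  + case: src H => [j|j|j] H; try by apply: msgP_ext (HM _ dst p _) => //; right.
    move: H; rewrite /g' /= /upd; case: eqP => [Ej|Nj] H; last by apply: msgP_ext (HM _ dst p _) => //; right.
    subst j; case: (Hout _ _ H) => // H'; apply: msgP_ext (HM _ dst p _) => //; by right.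
Qed.


Lemma add_resp_mem s t resp x : x \in add_resp s t resp -> x \in resp \/ x = (s, t).
Proof.
rewrite /add_resp; case: ifP => _ H; first by left.
by move: H; rewrite mem_rcons inE => /orP [/eqP ->|H]; [right | left].
Qed.

Lemma add_resp_uniq s t resp : uniq (map fst resp) -> uniq (map fst (add_resp s t resp)).
Proof.
rewrite /add_resp; case: ifP => H U //; by rewrite map_rcons rcons_uniq H U.
Qed.

Lemma add_resp_all s t resp : s < n -> all (fun s => s < n) (map fst resp) ->
  all (fun s => s < n) (map fst (add_resp s t resp)).
Proof.
rewrite /add_resp; case: ifP => H //; by rewrite map_rcons all_rcons => -> ->.
Qed.

Lemma respOK_add Q s t resp t1 : respOK Q resp t1 -> (s \in Q -> tag_le t1 t) ->
  respOK Q (add_resp s t resp) t1.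
Proof.
move=> H1 H2 s0 t0 /add_resp_mem [H|[-> ->]]; [exact: H1 | exact: H2].
Qed.

Lemma get_inter g Q o resp t1 s d t :
  f <= (n - 1) %/ 2 ->
  GetOK g Q o resp t1 -> inflight g (Server s) d (PTagResp o t) ->
  uniq (map fst resp) -> all (fun s => s < n) (map fst resp) -> s < n ->
  majority n (add_resp s t resp) ->
  tag_le t1 (max_tag (add_resp s t resp)).
Proof.
move=> Hf [[UQ [SQ [AQ _]]] [HR HM]] Hin U A Hs Hmaj.
have Hm' : n < 2 * size (map fst (add_resp s t resp)) by rewrite size_map.
have [s0 [H1 H2]] := quorum_inter Hf UQ SQ AQ (add_resp_uniq s t U) Hm' (add_resp_all t Hs A).
move/mapP: H2 => [[s1 t2] Hm /= Es]; subst s1.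
apply: tag_le_trans (max_tag_in Hm).
case: (add_resp_mem Hm) => [H|[E1 E2]]; first exact: HR H H1.
subst s0 t2; exact: HM Hin H1.
Qed.


Lemma inflight_w_srv g wi st' n1 n2 x s0 d q :
  g_net g = n1 ++ x :: n2 ->
  inflight (g_set_net (g_set_w g wi st') (n1 ++ n2)) (Server s0) d q -> inflight g (Server s0) d q.
Proof. move=> Hnet [H|H]; [left; rewrite Hnet; exact: In_n1n2 | by right]. Qed.

Lemma inflight_r_srv g ri st' n1 n2 x s0 d q :
  g_net g = n1 ++ x :: n2 ->
  inflight (g_set_net (g_set_r g ri st') (n1 ++ n2)) (Server s0) d q -> inflight g (Server s0) d q.
Proof. move=> Hnet [H|H]; [left; rewrite Hnet; exact: In_n1n2 | by right]. Qed.

Lemma step_w_same tr g n1 n2 x wi :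
  Inv tr g -> g_net g = n1 ++ x :: n2 ->
  Inv (rcons tr LTau) (g_set_net (g_set_w g wi (g_w g wi)) (n1 ++ n2)).
Proof.
move=> I Hnet; have I' := I; move: I' => [_ [_ [_ [_ [_ [HS HM]]]]]].
apply: (quiet_frame I) => //.
- move=> j; exact: tag_le_refl.
- move=> j; rewrite /= /upd; case: eqP => [Ej|_] /=; [subst j|]; by [].
- move=> src d q [H|H]; left; first by left; rewrite Hnet; exact: In_n1n2.
  right; case: src H => // j; rewrite /= /upd; case: eqP => [->|_] //.
- move=> j; exact: (proj1 (HS _)).
- move=> j r x0; exact: (proj2 (HS _)).
Qed.

Lemma step_r_same tr g n1 n2 x ri :
  Inv tr g -> g_net g = n1 ++ x :: n2 ->
  Inv (rcons tr LTau) (g_set_net (g_set_r g ri (g_r g ri)) (n1 ++ n2)).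
Proof.
move=> I Hnet; have I' := I; move: I' => [_ [_ [_ [_ [_ [HS HM]]]]]].
apply: (quiet_frame I) => //.
- move=> j; exact: tag_le_refl.
- move=> j; rewrite /= /upd; case: eqP => [Ej|_] /=; [subst j|]; by [].
- move=> src d q [H|H]; left; first by left; rewrite Hnet; exact: In_n1n2.
  right; case: src H => // j; rewrite /= /upd; case: eqP => [->|_] //.
- move=> j; exact: (proj1 (HS _)).
- move=> j r x0; exact: (proj2 (HS _)).
Qed.

Lemma w_resp_wait tr g n1 n2 s wi w v resp t :
  Inv tr g -> g_net g = n1 ++ (Server s, Writer wi, PTagResp (OpW w) t) :: n2 ->
  w_ph (g_w g wi) = WGet w v resp ->
  Inv (rcons tr LTau) (g_set_net (g_set_w g wi (w_set (w_cnt (g_w g wi)) (WGet w v (add_resp s t resp))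
                                   (w_out (g_w g wi)) (g_w g wi))) (n1 ++ n2)).
Proof.
move=> I Hnet Hph; have I' := I; move: I' => [HT [HQ [HFR [HW [HR [HS HM]]]]]].
have Hin : inflight g (Server s) (Writer wi) (PTagResp (OpW w) t).
  left; rewrite Hnet; apply: List.in_or_app; right; by left.
have Hs : s < n by case: (HM _ _ _ Hin) => H _; exact: H.
have [W1 [W2 W3]] := HW wi; rewrite Hph in W3.
move: W3 => [A1 [A2 [A3 [A4 [A5 [A6 A7]]]]]].
apply: (writer_common I) => //.
- by left.
- move=> x H; rewrite Hnet; exact: In_n1n2.
- by move=> d q H; left.
- exact: TInv_quiet.
- by move=> o t0 /(DoneTag_quiet (l := LTau) isT) H; left.
- move=> pre x post w0 o1 t1 Ed Hinv Hw0 Hd.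
  case: (decomp_rcons Ed) => [[_ [Ex _]]|[post' [_ Etr]]]; first by subst x.
  have [F1 F2] := HFR _ _ _ _ _ _ Etr Hinv Hd; split.
  + move=> t2 v2 /NI_tau H; apply: F1; exact: H.
  + rewrite /= /upd Hw0 eqxx /= => v0' resp0 [E1 E2 E3]; subst w0 v0' resp0.
    have Hph' : w_ph (g_w g w.1) = WGet w v resp by rewrite A1.
    have [Q [Q1 [Q2 Q3]]] := F2 v resp Hph'.
    exists Q; split => //; split.
    * apply: respOK_add => //; exact: Q3 Hin.
    * move=> s0 d t0 /(inflight_w_srv Hnet) H; exact: Q3 H.
- rewrite /WInv /= /upd eqxx /=; split; [|split].
  + move=> c v0' /NI_tau H; apply: W1; exact: H.
  + move=> c t0 v0' /NI_tau H; have [B1 [B2|B2]] := W2 c t0 v0' (H ltac:(discriminate)); split => //.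
    * by move: B2 => [acks]; rewrite Hph.
    * by right; exact: In_rcons_l.
  + do 2 (split => //); split; first exact: In_rcons_l.
    split; first by move=> t0 v' /NI_tau H; apply: (A4 t0 v'); exact: H.
    split; first exact: add_resp_uniq.
    split; first exact: add_resp_all.
    move=> pre post v' Ed; case: (decomp_rcons Ed) => [[_ [Ex _]]|[post' [_ Etr]]] //.
    move=> c t0 vv /NI_tau H; exact: A7 pre post' v' Etr c t0 vv (H ltac:(discriminate)).
Qed.


Lemma tag_lt_succ (a m : Defs.tag) x : tag_le a m -> tag_lt a (m.1.+1, x).
Proof. case: a m => [a1 a2] [m1 m2]; rewrite /tag_le /tag_lt /= xpair_eqE. lia. Qed.

Lemma w_resp_put tr g n1 n2 s wi w v resp t :
  f <= (n - 1) %/ 2 -> f < n ->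
  Inv tr g -> g_net g = n1 ++ (Server s, Writer wi, PTagResp (OpW w) t) :: n2 ->
  w_ph (g_w g wi) = WGet w v resp -> majority n (add_resp s t resp) ->
  Inv (rcons tr (LPut w ((max_tag (add_resp s t resp)).1.+1, wi) v))
      (g_set_net (g_set_w g wi (w_set (w_cnt (g_w g wi)) (WPut w ((max_tag (add_resp s t resp)).1.+1, wi) [::])
          (w_out (g_w g wi) ++ @md_value_send V C f w ((max_tag (add_resp s t resp)).1.+1, wi) v) (g_w g wi))) (n1 ++ n2)).
Proof.
move=> Hf Hfn I Hnet Hph Hmaj; have I' := I; move: I' => [HT [HQ [HFR [HW [HR [HS HM]]]]]].
set tw := (_, wi).
have Hin : inflight g (Server s) (Writer wi) (PTagResp (OpW w) t).
  left; rewrite Hnet; apply: List.in_or_app; right; by left.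
have Hs : s < n by case: (HM _ _ _ Hin) => H _; exact: H.
have [W1 [W2 W3]] := HW wi; rewrite Hph in W3.
move: W3 => [A1 [A2 [A3 [A4 [A5 [A6 A7]]]]]].
move: HT => [T1 [T2 [T3 [T4 [T5 T6]]]]].
have K1 : forall pre post v' o1 t1, tr = pre ++ LInvW w v' :: post -> DoneTag pre o1 t1 -> tag_lt t1 tw.
  move=> pre post v' o1 t1 Etr Hd.
  have [_ F2] := HFR _ _ _ (OpW w) _ _ Etr erefl Hd.
  have Hph' : w_ph (g_w g w.1) = WGet w v resp by rewrite A1.
  have [Q HQ0] := F2 v resp Hph'.
  apply: tag_lt_succ; exact: get_inter Hf HQ0 Hin A5 A6 Hs Hmaj.
have [pre0 [post0 Etr0]] := In_split' A3.
set l := LPut w tw v.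
have NoW : forall t0 v0', List.In (LPut w t0 v0') (rcons tr l) -> t0 = tw /\ v0' = v.
  move=> t0 v0'; rewrite In_rcons => -[H|[-> ->]] //; by case: (A4 _ _ H).
apply: (writer_common I) => //.
- by right; rewrite /= A1.
- move=> x H; rewrite Hnet; exact: In_n1n2.
- move=> d q H; case: (In_app H) => {}H; first by left.
  right; move/In_to_servers: H => [-> [i [-> Hi]]].
  split; first by []. split; first by move=> j [<-]; lia.
  rewrite /= In_rcons; by right.
- split; [|split; [|split; [|split; [|split]]]].
  + move=> w0 t0 v0' t0' v0'' H1 H2; case: (w0 =P w) => [Ew|Nw].
    * subst w0; have [-> ->] := NoW _ _ H1; by have [-> ->] := NoW _ _ H2.
    * move: H1 H2; rewrite !In_rcons /l => -[H1|[E1 _ _]] [H2|[E2 _ _]];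
        [exact: T1 H1 H2 | by case: Nw | by case: Nw | by case: Nw].
  + move=> w0 t0 v0'; rewrite In_rcons => -[H|[E1 E2 _]]; first exact: T2 H.
    by subst w0 t0; rewrite /= A1.
  + move=> w0 w1 t0 v0' v1'; rewrite !In_rcons.
    have Hold : forall w' v', List.In (LPut w' tw v') tr -> False.
      move=> w' v' H; have [Ew' _] := T2 _ _ _ H.
      case: w' H Ew' => [wi' c] H /= Ew'; rewrite /= in Ew'; subst wi'.
      have Hd := A7 pre0 post0 v Etr0 c tw v' H.
      have := K1 pre0 post0 v _ _ Etr0 Hd; by rewrite tag_lt_irr.
    move=> [H1|[E1 E2 E3]] [H2|[E1' E2' E3']].
    * exact: T3 H1 H2.
    * subst; case: (Hold _ _ H1).
    * subst; case: (Hold _ _ H2).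
    * by subst.
  + move=> r v0' t0 v0'' t0'; rewrite !In_rcons => -[H1|//] [H2|//]; exact: T4 H1 H2.
  + move=> r v0' t0; rewrite In_rcons => -[H|//].
    case: (T5 _ _ _ H) => [H'|[w0 H']]; [by left | right; exists w0; exact: In_rcons_l].
  + move=> w0; rewrite In_rcons => -[H|//].
    have [t0 [v0' H']] := T6 _ H; exists t0, v0'; exact: In_rcons_l.
- move=> o t0 Hd; left; case: o Hd => [w0|r] /=.
  + move=> [H1 [v1 H2]]; rewrite In_rcons in H1; case: H1 => [H1|//]; split => //.
    exists v1; move: H2; rewrite In_rcons => -[//|[E1 E2 E3]]; subst.
    have [t2 [v2 H2]] := T6 _ H1; case: (A4 _ _ H2).
  + move=> [v1]; rewrite In_rcons => -[H|//]; by exists v1.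
- move=> pre x post w0 o1 t1 Ed Hinv Hw0 Hd.
  case: (decomp_rcons Ed) => [[_ [Ex _]]|[post' [_ Etr]]]; first by subst x.
  have [F1 F2] := HFR _ _ _ _ _ _ Etr Hinv Hd; split.
  + move=> t2 v2; rewrite In_rcons => -[H|[E1 E2 E3]]; first exact: F1 H.
    subst w0 t2 v2.
    have Hph' : w_ph (g_w g w.1) = WGet w v resp by rewrite A1.
    have [Q HQ0] := F2 v resp Hph'.
    apply: tag_lt_succ; exact: get_inter Hf HQ0 Hin A5 A6 Hs Hmaj.
  + by rewrite /= /upd Hw0 eqxx.
- rewrite /WInv /= /upd eqxx /=; split; [|split].
  + move=> c v0'; rewrite In_rcons => -[H|//]; exact: W1 H.
  + move=> c t0 v0'; rewrite In_rcons => -[H|[E1 E2 E3]].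
    * have [B1 [B2|B2]] := W2 c t0 v0' H; split => //.
      -- by move: B2 => [acks]; rewrite Hph.
      -- by right; exact: In_rcons_l.
    * subst w t0 v0'; split; [exact: A2 | left; by exists [::]].
  + do 2 (split => //); split; first by exists v; rewrite In_rcons; right.
    by [].
Qed.


Lemma sadd_uniq (T : eqType) (x : T) l : uniq l -> uniq (sadd x l).
Proof. rewrite /sadd; case: ifP => H U //; by rewrite rcons_uniq H U. Qed.

Lemma sadd_all (x : nat) l : x < n -> all (fun s => s < n) l -> all (fun s => s < n) (sadd x l).
Proof. rewrite /sadd; case: ifP => H Hx A //; by rewrite all_rcons Hx A. Qed.

Lemma ack_facts tr g n1 n2 s wi w t acks :
  Inv tr g -> g_net g = n1 ++ (Server s, Writer wi, PAck w) :: n2 ->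
  w_ph (g_w g wi) = WPut w t acks ->
  [/\ s < n, uniq (sadd s acks), all (fun s => s < n) (sadd s acks) &
      forall s0, s0 \in sadd s acks -> tag_le t (stag g s0)].
Proof.
move=> I Hnet Hph; have I' := I; move: I' => [HT [HQ [HFR [HW [HR [HS HM]]]]]].
have Hin : inflight g (Server s) (Writer wi) (PAck w).
  left; rewrite Hnet; apply: List.in_or_app; right; by left.
have [Hs [_ [s' [t' [v' [[Es] [Hput Hle]]]]]]] := HM _ _ _ Hin; subst s'.
have Hs' : s < n by exact: Hs.
have [W1 [W2 W3]] := HW wi; rewrite Hph in W3.
move: W3 => [A1 [A2 [[v A3] [A4 [A5 A6]]]]].
have [Et _] := (proj1 HT) _ _ _ _ _ Hput A3; subst t'.
split => //; [exact: sadd_uniq | exact: sadd_all |].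
move=> s0 /mem_sadd [->|/A6] //.
Qed.

Lemma w_ack_wait tr g n1 n2 s wi w t acks :
  Inv tr g -> g_net g = n1 ++ (Server s, Writer wi, PAck w) :: n2 ->
  w_ph (g_w g wi) = WPut w t acks ->
  Inv (rcons tr LTau) (g_set_net (g_set_w g wi (w_set (w_cnt (g_w g wi)) (WPut w t (sadd s acks))
                                   (w_out (g_w g wi)) (g_w g wi))) (n1 ++ n2)).
Proof.
move=> I Hnet Hph; have [B1 B2 B3 B4] := ack_facts I Hnet Hph.
have I' := I; move: I' => [HT [HQ [HFR [HW [HR [HS HM]]]]]].
have [W1 [W2 W3]] := HW wi; rewrite Hph in W3.
move: W3 => [A1 [A2 [[v A3] [A4 [A5 A6]]]]].
apply: (writer_common I) => //.
- by left.
- move=> x H; rewrite Hnet; exact: In_n1n2.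
- by move=> d q H; left.
- exact: TInv_quiet.
- by move=> o t0 /(DoneTag_quiet (l := LTau) isT) H; left.
- move=> pre x post w0 o1 t1 Ed Hinv Hw0 Hd.
  case: (decomp_rcons Ed) => [[_ [Ex _]]|[post' [_ Etr]]]; first by subst x.
  have [F1 F2] := HFR _ _ _ _ _ _ Etr Hinv Hd; split.
  + move=> t2 v2 /NI_tau H; apply: F1; exact: H.
  + by rewrite /= /upd Hw0 eqxx.
- rewrite /WInv /= /upd eqxx /=; split; [|split].
  + move=> c v0' /NI_tau H; apply: W1; exact: H.
  + move=> c t0 v0' /NI_tau H; have [C1 [C2|C2]] := W2 c t0 v0' (H ltac:(discriminate)); split => //.
    * by move: C2 => [acks0]; rewrite Hph => -[-> -> _]; left; exists (sadd s acks).
    * by right; exact: In_rcons_l.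
  + do 2 (split => //); split; first by exists v; exact: In_rcons_l.
    by [].
Qed.

Lemma w_ack_done tr g n1 n2 s wi w t acks :
  Inv tr g -> g_net g = n1 ++ (Server s, Writer wi, PAck w) :: n2 ->
  w_ph (g_w g wi) = WPut w t acks -> n - f <= size (sadd s acks) ->
  Inv (rcons tr (LRespW w)) (g_set_net (g_set_w g wi (w_set (w_cnt (g_w g wi)) WIdle
                                   (w_out (g_w g wi)) (g_w g wi))) (n1 ++ n2)).
Proof.
move=> I Hnet Hph Hk; have [B1 B2 B3 B4] := ack_facts I Hnet Hph.
have I' := I; move: I' => [HT [HQ [HFR [HW [HR [HS HM]]]]]].
have [W1 [W2 W3]] := HW wi; rewrite Hph in W3.
move: W3 => [A1 [A2 [[v A3] [A4 [A5 A6]]]]].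
move: HT => [T1 [T2 [T3 [T4 [T5 T6]]]]].
have NI : forall x, x <> LRespW w -> List.In x (rcons tr (LRespW w)) -> List.In x tr.
  by move=> x Hx; rewrite In_rcons => -[].
apply: (writer_common I) => //.
- by right; rewrite /= A1.
- move=> x H; rewrite Hnet; exact: In_n1n2.
- by move=> d q H; left.
- split; [|split; [|split; [|split; [|split]]]].
  + move=> w0 t0 v0' t0' v0'' /NI H1 /NI H2; exact: T1 (H1 ltac:(discriminate)) (H2 ltac:(discriminate)).
  + move=> w0 t0 v0' /NI H; exact: T2 (H ltac:(discriminate)).
  + move=> w0 w1 t0 v0' v1' /NI H1 /NI H2; exact: T3 (H1 ltac:(discriminate)) (H2 ltac:(discriminate)).
  + move=> r v0' t0 v0'' t0' /NI H1 /NI H2; exact: T4 (H1 ltac:(discriminate)) (H2 ltac:(discriminate)).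
  + move=> r v0' t0 /NI H; case: (T5 _ _ _ (H ltac:(discriminate))) => [H'|[w0 H']]; [by left | right; exists w0; exact: In_rcons_l].
  + move=> w0; rewrite In_rcons => -[H|[->]].
    * have [t0 [v0' H']] := T6 _ H; exists t0, v0'; exact: In_rcons_l.
    * exists t, v; exact: In_rcons_l.
- move=> o t0 Hd; case: o Hd => [w0|r] /=.
  + move=> [H1 [v1 H2]]; have H2' := NI (LPut w0 t0 v1) ltac:(discriminate) H2.
    move: H1; rewrite In_rcons => -[H1|[E1]].
    * by left; split => //; exists v1.
    * subst w0; have [Et _] := T1 _ _ _ _ _ H2' A3; subst t0.
      right; exists (sadd s acks); split => //.
  + move=> [v1 /NI H]; left; exists v1; exact: H.
- move=> pre x post w0 o1 t1 Ed Hinv Hw0 Hd.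
  case: (decomp_rcons Ed) => [[_ [Ex _]]|[post' [_ Etr]]]; first by subst x.
  have [F1 F2] := HFR _ _ _ _ _ _ Etr Hinv Hd; split.
  + move=> t2 v2 /NI H; apply: F1; exact: H.
  + by rewrite /= /upd Hw0 eqxx.
- rewrite /WInv /= /upd eqxx /=; split; [|split].
  + move=> c v0' /NI H; apply: W1; exact: H.
  + move=> c t0 v0' /NI H; have [C1 [C2|C2]] := W2 c t0 v0' (H ltac:(discriminate)); split => //.
    * move: C2 => [acks0]; rewrite Hph => -[E1 _ _]; right; rewrite In_rcons; by right; rewrite E1.
    * by right; exact: In_rcons_l.
  + by [].
Qed.


Lemma map_phi (L : seq (nat * C)) v :
  (forall x, List.In x L -> x.2 = Phi x.1 v) -> L = [seq (i, Phi i v) | i <- map fst L].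
Proof.
elim: L => [|[i c] L IH] //= H; rewrite -IH; last by move=> x Hx; apply: H; right.
by have /= <- := H (i, c) (or_introl erefl).
Qed.

Lemma decode_ok tr t' (recv : seq (nat * Defs.tag * C)) (L : seq (nat * C)) :
  mds_decodes n (n - f) Phi Phiinv -> 0 < n - f ->
  TInv tr ->
  (forall s t c, List.In (s, t, c) recv -> s < n /\ good_tc tr s t c) ->
  decodable n f t' recv L ->
  (t' = t0 /\ Phiinv L = v0) \/ exists w, List.In (LPut w t' (Phiinv L)) tr.
Proof.
move=> Hcode Hk [T1 [T2 [T3 _]]] Hrecv [HsL [HU HL]].
have HA : all (fun s => s < n) (map fst L).
  rewrite all_map; apply: all_In => x Hx /=.
  exact: (proj1 (Hrecv _ _ _ (HL _ Hx))).
have HS : size (map fst L) = n - f by rewrite size_map HsL /k.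
have Hg : forall x, List.In x L -> good_tc tr x.1 t' x.2.
  move=> x Hx; exact: (proj2 (Hrecv _ _ _ (HL _ Hx))).
case: L HsL HU HL HA HS Hg => [|x0 L'] HsL HU HL HA HS Hg; first by rewrite /= /k in HsL; rewrite -HsL in Hk.
case: (Hg x0 (or_introl erefl)) => [[Et _]|[w [v [Hput _]]]].
- subst t'; left; split => //.
  rewrite (@map_phi (x0 :: L') v0); first exact: Hcode.
  move=> x Hx; case: (Hg x Hx) => [[_ ->]//|[w [v [Hput _]]]].
  by have [_ ] := T2 _ _ _ Hput.
- right; exists w.
  rewrite (@map_phi (x0 :: L') v) ?Hcode //.
  move=> x Hx; case: (Hg x Hx) => [[Et _]|[w' [v' [Hput' ->]]]].
  + subst t'; by have [_ ] := T2 _ _ _ Hput.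
  + have Ew := T3 _ _ _ _ _ Hput Hput'; subst w'.
    by have [_ ->] := T1 _ _ _ _ _ Hput Hput'.
Qed.


Lemma r_resp_wait tr g n1 n2 s ri r resp t :
  Inv tr g -> g_net g = n1 ++ (Server s, Reader ri, PTagResp (OpR r) t) :: n2 ->
  r_ph (g_r g ri) = RGet r resp ->
  Inv (rcons tr LTau) (g_set_net (g_set_r g ri (r_set (r_cnt (g_r g ri)) (RGet r (add_resp s t resp))
                                   (r_out (g_r g ri)) (g_r g ri))) (n1 ++ n2)).
Proof.
move=> I Hnet Hph; have I' := I; move: I' => [HT [HQ [HFR [HW [HR [HS HM]]]]]].
have Hin : inflight g (Server s) (Reader ri) (PTagResp (OpR r) t).
  left; rewrite Hnet; apply: List.in_or_app; right; by left.
have Hs : s < n by case: (HM _ _ _ Hin) => H _; exact: H.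
have [R1 [R2 R3]] := HR ri; rewrite Hph in R3.
move: R3 => [A1 [A2 [A3 [A4 A5]]]].
apply: (reader_common I) => //.
- move=> r0 H1 H2; rewrite /= /upd; case: eqP => [E0|_] //=.
  + rewrite E0 in H2; split => // resp0 [E1 _]; subst r0; exact: (H2 resp).
  + split => // trr recv ->; by exists recv.
- by left.
- move=> x H; rewrite Hnet; exact: In_n1n2.
- by move=> d q H; left.
- exact: TInv_quiet.
- by move=> o t0 /(DoneTag_quiet (l := LTau) isT) H; left.
- move=> pre x post r0 o1 t1 Ed Hinv Hr0 Hd.
  case: (decomp_rcons Ed) => [[_ [Ex _]]|[post' [_ Etr]]]; first by subst x.
  have [F1 [F2 F3]] := HFR _ _ _ _ _ _ Etr Hinv Hd; split; [|split].
  + move=> v2 t2 /NI_tau H; apply: F1; exact: H.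
  + rewrite /= /upd Hr0 eqxx /= => resp0 [E1 E2]; subst r0 resp0.
    have Hph' : r_ph (g_r g r.1) = RGet r resp by rewrite A1.
    have [Q [Q1 [Q2 Q3]]] := F2 resp Hph'.
    exists Q; split => //; split.
    * apply: respOK_add => //; exact: Q3 Hin.
    * move=> s0 d t0 /(inflight_r_srv Hnet) H; exact: Q3 H.
  + by rewrite /= /upd Hr0 eqxx.
- rewrite /RInv /= /upd eqxx /=; split; [|split].
  + move=> c v0' t0 /NI_tau H; apply: R1; exact: H.
  + move=> c /NI_tau H; apply: R2; exact: H.
  + do 2 (split => //); split; first by move=> v0' t0 /NI_tau H; apply: (A3 v0' t0); exact: H.
    split; [exact: add_resp_uniq | exact: add_resp_all].
Qed.

Lemma r_resp_data tr g n1 n2 s ri r resp t :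
  f <= (n - 1) %/ 2 -> f < n ->
  Inv tr g -> g_net g = n1 ++ (Server s, Reader ri, PTagResp (OpR r) t) :: n2 ->
  r_ph (g_r g ri) = RGet r resp -> majority n (add_resp s t resp) ->
  Inv (rcons tr LTau) (g_set_net (g_set_r g ri (r_set (r_cnt (g_r g ri)) (RData r (max_tag (add_resp s t resp)) [::])
         (r_out (g_r g ri) ++ @md_meta_send V C f (ReadValue r (max_tag (add_resp s t resp)))) (g_r g ri))) (n1 ++ n2)).
Proof.
move=> Hf Hfn I Hnet Hph Hmaj; have I' := I; move: I' => [HT [HQ [HFR [HW [HR [HS HM]]]]]].
set trr := max_tag _.
have Hin : inflight g (Server s) (Reader ri) (PTagResp (OpR r) t).
  left; rewrite Hnet; apply: List.in_or_app; right; by left.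
have Hs : s < n by case: (HM _ _ _ Hin) => H _; exact: H.
have [R1 [R2 R3]] := HR ri; rewrite Hph in R3.
move: R3 => [A1 [A2 [A3 [A4 A5]]]].
apply: (reader_common I) => //.
- move=> r0 H1 H2; rewrite /= /upd; case: eqP => [E0|_] //=.
  + split => // trr0 recv [E1 _ _]; subst r0; rewrite E0 in H2; case: (H2 resp Hph).
  + split => // trr0 recv ->; by exists recv.
- by left.
- move=> x H; rewrite Hnet; exact: In_n1n2.
- move=> d q H; case: (In_app H) => {}H; first by left.
  right; move/In_to_servers: H => [-> [i [-> Hi]]].
  split; first by []. split; first by move=> j [<-]; lia.
  rewrite /rvOK /= /upd A1 eqxx /=; split => //; split; [by move=> resp0 [] | by move=> trr0 recv E; case: E].
- exact: TInv_quiet.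
- by move=> o t0 /(DoneTag_quiet (l := LTau) isT) H; left.
- move=> pre x post r0 o1 t1 Ed Hinv Hr0 Hd.
  case: (decomp_rcons Ed) => [[_ [Ex _]]|[post' [_ Etr]]]; first by subst x.
  have [F1 [F2 F3]] := HFR _ _ _ _ _ _ Etr Hinv Hd; split; [|split].
  + move=> v2 t2 /NI_tau H; apply: F1; exact: H.
  + by rewrite /= /upd Hr0 eqxx.
  + rewrite /= /upd Hr0 eqxx /= => trr0 recv [E1 E2 _]; subst r0 trr0.
    have Hph' : r_ph (g_r g r.1) = RGet r resp by rewrite A1.
    have [Q HQ0] := F2 resp Hph'.
    exact: get_inter Hf HQ0 Hin A4 A5 Hs Hmaj.
- rewrite /RInv /= /upd eqxx /=; split; [|split].
  + move=> c v0' t0 /NI_tau H; apply: R1; exact: H.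
  + move=> c /NI_tau H; apply: R2; exact: H.
  + do 2 (split => //); split => //.
    by move=> v0' t0 /NI_tau H; apply: (A3 v0' t0); exact: H.
Qed.


Lemma pcoded_facts tr g n1 n2 s ri r trr recv t c :
  Inv tr g -> g_net g = n1 ++ (Server s, Reader ri, PCoded r t c) :: n2 ->
  r_ph (g_r g ri) = RData r trr recv ->
  r.1 = ri /\ r.2 < r_cnt (g_r g ri) /\ (forall v t, ~ List.In (LRespR r v t) tr) /\
  forall s0 t0 c0, List.In (s0, t0, c0) (rcons recv (s, t, c)) ->
     s0 < n /\ tag_le trr t0 /\ tag_le t0 (stag g s0) /\ good_tc tr s0 t0 c0.
Proof.
move=> I Hnet Hph; have I' := I; move: I' => [HT [HQ [HFR [HW [HR [HS HM]]]]]].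
have Hin : inflight g (Server s) (Reader ri) (PCoded r t c).
  left; rewrite Hnet; apply: List.in_or_app; right; by left.
have [Hs [_ [s' [[Es] [[Er] [P1 [P2 [P3 [P4 P5]]]]]]]]] := HM _ _ _ Hin; subst s'.
have [R1 [R2 R3]] := HR ri; rewrite Hph in R3.
move: R3 => [A1 [A2 [A3 A4]]].
do 3 (split => //).
move=> s0 t0 c0; rewrite In_rcons => -[H|[E1 E2 E3]]; first exact: A4 H.
subst s0 t0 c0; split; first exact: Hs.
split; last by split.
by apply: (P3 trr recv); rewrite -Er.
Qed.

Lemma r_data_wait tr g n1 n2 s ri r trr recv t c :
  Inv tr g -> g_net g = n1 ++ (Server s, Reader ri, PCoded r t c) :: n2 ->
  r_ph (g_r g ri) = RData r trr recv ->
  Inv (rcons tr LTau) (g_set_net (g_set_r g ri (r_set (r_cnt (g_r g ri)) (RData r trr (rcons recv (s, t, c)))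
                                   (r_out (g_r g ri)) (g_r g ri))) (n1 ++ n2)).
Proof.
move=> I Hnet Hph; have [A1 [A2 [A3 A4]]] := pcoded_facts I Hnet Hph.
have I' := I; move: I' => [HT [HQ [HFR [HW [HR [HS HM]]]]]].
have [R1 [R2 R3]] := HR ri.
apply: (reader_common I) => //.
- move=> r0 H1 H2; rewrite /= /upd; case: eqP => [E0|_] //=.
  + split => // trr0 recv0 [E1 E2 _]; subst r0 trr0; exists recv; by rewrite A1.
  + split => // trr0 recv0 ->; by exists recv0.
- by left.
- move=> x H; rewrite Hnet; exact: In_n1n2.
- by move=> d q H; left.
- exact: TInv_quiet.
- by move=> o t0 /(DoneTag_quiet (l := LTau) isT) H; left.
- move=> pre x post r0 o1 t1 Ed Hinv Hr0 Hd.
  case: (decomp_rcons Ed) => [[_ [Ex _]]|[post' [_ Etr]]]; first by subst x.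
  have [F1 [F2 F3]] := HFR _ _ _ _ _ _ Etr Hinv Hd; split; [|split].
  + move=> v2 t2 /NI_tau H; apply: F1; exact: H.
  + by rewrite /= /upd Hr0 eqxx.
  + rewrite /= /upd Hr0 eqxx /= => trr0 recv0 [E1 E2 _]; subst r0 trr0.
    apply: (F3 trr recv); by rewrite A1.
- rewrite /RInv /= /upd eqxx /=; split; [|split].
  + move=> c0 v0' t0 /NI_tau H; apply: R1; exact: H.
  + move=> c0 /NI_tau H; apply: R2; exact: H.
  + do 2 (split => //); split.
    * by move=> v0' t0 /NI_tau H; apply: (A3 v0' t0); exact: H.
    * move=> s0 t0 c0 /A4 [B1 [B2 [B3 B4]]]; split => //; split => //; split => //.
      exact: good_tc_mono (@In_rcons_l tr LTau) B4.
Qed.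

Lemma r_data_done tr g n1 n2 s ri r trr recv t c t' L :
  1 <= f <= (n - 1) %/ 2 -> mds_decodes n (n - f) Phi Phiinv ->
  Inv tr g -> g_net g = n1 ++ (Server s, Reader ri, PCoded r t c) :: n2 ->
  r_ph (g_r g ri) = RData r trr recv ->
  decodable n f t' (rcons recv (s, t, c)) L ->
  Inv (rcons tr (LRespR r (Phiinv L) t'))
      (g_set_net (g_set_r g ri (r_set (r_cnt (g_r g ri)) RIdle
          (r_out (g_r g ri) ++ @md_meta_send V C f (ReadComplete r trr)) (g_r g ri))) (n1 ++ n2)).
Proof.
move=> Hf Hcode I Hnet Hph Hdec; have [A1 [A2 [A3 A4]]] := pcoded_facts I Hnet Hph.
have I' := I; move: I' => [HT [HQ [HFR [HW [HR [HS HM]]]]]].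
have [R1 [R2 R3]] := HR ri.
have [Hk Hfn] : 0 < n - f /\ f < n.
  move: Hf => /andP [H1 H2]; have : 2 * ((n - 1) %/ 2) <= n - 1 by rewrite mulnC leq_trunc_div.
  lia.
set l := LRespR r (Phiinv L) t'.
have NI : forall x, x <> l -> List.In x (rcons tr l) -> List.In x tr.
  by move=> x Hx; rewrite In_rcons => -[].
move: (Hdec) => [HsL [HU HL]].
have [x0 Hx0] : exists x0, List.In x0 L.
  have : 0 < size L by rewrite HsL /k.
  case: (L) => [|x0 L'] //= _; by exists x0; left.
have Ht' : tag_le trr t' by have [_ [B _]] := A4 _ _ _ (HL _ Hx0).
move: (HT) => [T1 [T2 [T3 [T4 [T5 T6]]]]].
apply: (reader_common I) => //.
- move=> r0 H1 H2; rewrite /= /upd; case: eqP => [E0|_] //=.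
  split => // trr0 recv0 ->; by exists recv0.
- by right; rewrite /= A1.
- move=> x H; rewrite Hnet; exact: In_n1n2.
- move=> d q H; case: (In_app H) => {}H; first by left.
  right; move/In_to_servers: H => [-> [i [-> Hi]]].
  split; first by []. split; first by move=> j [<-]; lia.
  by [].
- split; [|split; [|split; [|split; [|split]]]].
  + move=> w0 t0 v0' t0' v0'' /NI H1 /NI H2; exact: T1 (H1 ltac:(discriminate)) (H2 ltac:(discriminate)).
  + move=> w0 t0 v0' /NI H; exact: T2 (H ltac:(discriminate)).
  + move=> w0 w1 t0 v0' v1' /NI H1 /NI H2; exact: T3 (H1 ltac:(discriminate)) (H2 ltac:(discriminate)).
  + move=> r0 v0' t0 v0'' t0'; rewrite !In_rcons.
    move=> [H1|[E1 E2 E3]] [H2|[E1' E2' E3']]; first exact: T4 H1 H2.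
    * subst r0; case: (A3 _ _ H1).
    * subst r0; case: (A3 _ _ H2).
    * by subst.
  + move=> r0 v0' t0; rewrite In_rcons => -[H|[E1 E2 E3]].
    * case: (T5 _ _ _ H) => [H'|[w0 H']]; [by left | right; exists w0; exact: In_rcons_l].
    * subst r0 v0' t0.
      have Hrecv : forall s0 t0 c0, List.In (s0, t0, c0) (rcons recv (s, t, c)) -> s0 < n /\ good_tc tr s0 t0 c0.
        by move=> s0 t0 c0 /A4 [B1 [_ [_ B4]]].
      case: (decode_ok Hcode Hk HT Hrecv Hdec) => [H|[w0 H]]; [by left | right; exists w0; exact: In_rcons_l].
  + move=> w0 /NI H; have [t0 [v0' H']] := T6 _ (H ltac:(discriminate)); exists t0, v0'; exact: In_rcons_l.
- move=> o t0 Hd; case: o Hd => [w0|r0] /=.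
  + move=> [H1 [v1 H2]]; left; split; first exact: NI H1.
    by exists v1; exact: NI H2.
  + move=> [v1]; rewrite In_rcons => -[H|[E1 E2 E3]]; first by left; exists v1.
    subst r0 v1 t0; right; exists (map fst L); split => //; split; first by rewrite size_map HsL.
    split.
    * rewrite all_map; apply: all_In => x Hx /=; exact: (proj1 (A4 _ _ _ (HL _ Hx))).
    * move=> s0 /mem_map_fst [x [Hx <-]]; exact: (proj1 (proj2 (proj2 (A4 _ _ _ (HL _ Hx))))).
- move=> pre x post r0 o1 t1 Ed Hinv Hr0 Hd.
  case: (decomp_rcons Ed) => [[_ [Ex _]]|[post' [_ Etr]]]; first by subst x.
  have [F1 [F2 F3]] := HFR _ _ _ _ _ _ Etr Hinv Hd; split; [|split].
  + move=> v2 t2; rewrite In_rcons => -[H|[E1 E2 E3]]; first exact: F1 H.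
    subst r0 v2 t2; apply: tag_le_trans Ht'; apply: (F3 trr recv); by rewrite A1.
  + by rewrite /= /upd Hr0 eqxx.
  + by rewrite /= /upd Hr0 eqxx.
- rewrite /RInv /= /upd eqxx /=; split; [|split].
  + move=> c0 v0' t0; rewrite In_rcons => -[H|[E1 E2 E3]]; first exact: R1 H.
    by subst r; exact: A2.
  + move=> c0 /NI H; apply: R2; exact: H.
  + by [].
Qed.


Lemma inv_write tr g wi v :
  Inv tr g -> w_ph (g_w g wi) = WIdle ->
  let w := (wi, w_cnt (g_w g wi)) in
  Inv (rcons tr (LInvW w v))
    (g_set_w g wi (w_set (w_cnt (g_w g wi)).+1 (WGet w v [::])
       (w_out (g_w g wi) ++ to_servers 0 n (PTagQuery (OpW w))) (g_w g wi))).
Proof.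
move=> I Hph w; have I' := I; move: I' => [HT [HQ [HFR [HW [HR [HS HM]]]]]].
have [W1 [W2 W3]] := HW wi.
set st' := w_set _ _ _ _.
change (Inv (rcons tr (LInvW w v)) (g_set_net (g_set_w g wi st') (g_net g))).
set l := LInvW w v.
have NI : forall x, x <> l -> List.In x (rcons tr l) -> List.In x tr.
  by move=> x Hx; rewrite In_rcons => -[].
have NoPut : forall t v', ~ List.In (LPut w t v') tr.
  move=> t v' H; have [H1 _] := W2 _ _ _ H; by rewrite ltnn in H1.
have Resp : forall c t vv, List.In (LPut (wi, c) t vv) tr -> List.In (LRespW (wi, c)) tr.
  move=> c t vv H; have [_ [[acks]|//]] := W2 _ _ _ H; by rewrite Hph.
apply: (writer_common I) => //.
- by right; rewrite /= eqxx.
- move=> d q H; case: (In_app H) => {}H; first by left.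
  right; move/In_to_servers: H => [-> [i [-> Hi]]].
  split; first by []. split; first by move=> j [<-]; lia.
  by rewrite /opfresh /= /upd eqxx /=.
- exact: TInv_quiet.
- by move=> o t0 /(DoneTag_quiet (l := l) isT) H; left.
- move=> pre x post w0 o1 t1 Ed Hinv Hw0 Hd.
  case: (decomp_rcons Ed) => [[Epre [Ex _]]|[post' [_ Etr]]].
  + subst x pre; move: Hinv => /= Ew0; subst w0.
    have [Q HQ0] := HQ _ _ Hd.
    split.
    * move=> t2 v2 /NI H; case: (NoPut t2 v2 (H ltac:(discriminate))).
    * rewrite /= /upd eqxx /= => v' resp [_ <-]; exists Q; split => //; split => //.
      move=> s0 d t0 Hin _.
      have Hin' : inflight g (Server s0) d (PTagResp (OpW w) t0) by case: Hin => H; [left|right].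
      have [_ [_ Hf']] := HM _ _ _ Hin'; by rewrite /= ltnn in Hf'.
  + have [F1 F2] := HFR _ _ _ _ _ _ Etr Hinv Hd.
    have Hx : List.In x tr by rewrite Etr; apply: List.in_or_app; right; left.
    case: x Hinv Hx {Ed Etr} => // w1 v1 /= Ew1 Hx; subst w1.
    have Hx' : List.In (LInvW (wi, w0.2) v1) tr by rewrite -Hw0 -surjective_pairing.
    have Hlt' := W1 _ _ Hx'.
    split.
    * move=> t2 v2 /NI H; exact: F1 (H ltac:(discriminate)).
    * rewrite /= /upd Hw0 eqxx /= => v' resp [Ew]; by rewrite -Ew /= ltnn in Hlt'.
- rewrite /WInv /= /upd eqxx /=; split; [|split].
  + move=> c v'; rewrite In_rcons => -[H|E]; first exact: leq_trans (W1 _ _ H) (leqnSn _).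
    case: E => Ec _; move: Ec; rewrite /w => -[->]; exact: ltnSn.
  + move=> c t0 v'' /NI H; have H' := H ltac:(discriminate); split.
    * exact: ltn_trans (proj1 (W2 _ _ _ H')) (ltnSn _).
    * right; apply: In_rcons_l; exact: Resp H'.
  + split => //; split => //; split; first by rewrite In_rcons; right.
    split; first by move=> t v' /NI H; exact: NoPut (H ltac:(discriminate)).
    split => //; split => //.
    move=> pre post v' Ed; case: (decomp_rcons Ed) => [[Epre _]|[post' [_ Etr]]].
    * subst pre; move=> c t vv /NI H; have H' := H ltac:(discriminate).
      split; [exact: Resp H' | by exists vv].
    * have Hx : List.In (LInvW w v') tr by rewrite Etr; apply: List.in_or_app; right; left.
      have := W1 _ _ Hx; by rewrite ltnn.
Qed.

Lemma inv_read tr g ri :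
  Inv tr g -> r_ph (g_r g ri) = RIdle ->
  let r := (ri, r_cnt (g_r g ri)) in
  Inv (rcons tr (LInvR r))
    (g_set_r g ri (r_set (r_cnt (g_r g ri)).+1 (RGet r [::])
       (r_out (g_r g ri) ++ to_servers 0 n (PTagQuery (OpR r))) (g_r g ri))).
Proof.
move=> I Hph r; have I' := I; move: I' => [HT [HQ [HFR [HW [HR [HS HM]]]]]].
have [R1 [R2 R3]] := HR ri.
set st' := r_set _ _ _ _.
change (Inv (rcons tr (LInvR r)) (g_set_net (g_set_r g ri st') (g_net g))).
set l := LInvR r.
have NI : forall x, x <> l -> List.In x (rcons tr l) -> List.In x tr.
  by move=> x Hx; rewrite In_rcons => -[].
have NoResp : forall v t, ~ List.In (LRespR r v t) tr.
  move=> v t H; have := R1 _ _ _ H; by rewrite ltnn.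
apply: (reader_common I) => //.
- move=> r0 H1 H2; rewrite /= /upd; case: eqP => [E0|_] //=.
  + split => // resp0 [Er0]; subst r0; by rewrite /= ltnn in H1.
  + split => // trr0 recv0 ->; by exists recv0.
- by right; rewrite /= eqxx.
- move=> d q H; case: (In_app H) => {}H; first by left.
  right; move/In_to_servers: H => [-> [i [-> Hi]]].
  split; first by []. split; first by move=> j [<-]; lia.
  by rewrite /opfresh /= /upd eqxx /=.
- exact: TInv_quiet.
- by move=> o t0 /(DoneTag_quiet (l := l) isT) H; left.
- move=> pre x post r0 o1 t1 Ed Hinv Hr0 Hd.
  case: (decomp_rcons Ed) => [[Epre [Ex _]]|[post' [_ Etr]]].
  + subst x pre; move: Hinv => /= Er0; subst r0.
    have [Q HQ0] := HQ _ _ Hd.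
    split; [|split].
    * move=> v2 t2 /NI H; case: (NoResp v2 t2 (H ltac:(discriminate))).
    * rewrite /= /upd eqxx /= => resp [<-]; exists Q; split => //; split => //.
      move=> s0 d t0 Hin _.
      have Hin' : inflight g (Server s0) d (PTagResp (OpR r) t0) by case: Hin => H; [left|right].
      have [_ [_ Hf']] := HM _ _ _ Hin'; by rewrite /= ltnn in Hf'.
    * by rewrite /= /upd eqxx.
  + have [F1 [F2 F3]] := HFR _ _ _ _ _ _ Etr Hinv Hd.
    have Hx : List.In x tr by rewrite Etr; apply: List.in_or_app; right; left.
    case: x Hinv Hx {Ed Etr} => // r1 /= Er1 Hx; subst r1.
    have Hx' : List.In (LInvR (ri, r0.2)) tr by rewrite -Hr0 -surjective_pairing.
    have Hlt' := R2 _ Hx'.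
    split; [|split].
    * move=> v2 t2 /NI H; exact: F1 (H ltac:(discriminate)).
    * rewrite /= /upd Hr0 eqxx /= => resp [Er]; by rewrite -Er /= ltnn in Hlt'.
    * by rewrite /= /upd Hr0 eqxx.
- rewrite /RInv /= /upd eqxx /=; split; [|split].
  + move=> c v' t0 /NI H; exact: ltn_trans (R1 _ _ _ (H ltac:(discriminate))) (ltnSn _).
  + move=> c; rewrite In_rcons => -[H|[<-]] //.
    exact: ltn_trans (R2 _ H) (ltnSn _).
  + split => //; split => //; split => //.
    by move=> v' t0 /NI H; exact: NoResp (H ltac:(discriminate)).
Qed.


Lemma Inv_step tr g l g' :
  1 <= f <= (n - 1) %/ 2 -> mds_decodes n (n - f) Phi Phiinv ->
  Inv tr g -> step n f Phi Phiinv g l g' -> Inv (rcons tr l) g'.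
Proof.
move=> Hf Hcode I HS.
have [Hf1 Hf2] : f <= (n - 1) %/ 2 /\ f < n.
  move: Hf => /andP [H1 H2]; have : 2 * ((n - 1) %/ 2) <= n - 1 by rewrite mulnC leq_trunc_div.
  split => //; lia.
move: I; case: HS.
- move=> g0 wi v _ Hph w I; exact: inv_write.
- move=> g0 ri _ Hph r I; exact: inv_read.
- move=> g0 s dst p rest _ Hout I; exact: step_send_srv.
- move=> g0 wi dst p rest _ Hout I; exact: step_send_w.
- move=> g0 ri dst p rest _ Hout I; exact: step_send_r.
- move=> g0 n1 n2 src s p st' Hnet _ HR I; exact: (step_recv_srv Hf2 I Hnet HR).
- move=> g0 n1 n2 s wi p l0 st' Hnet _ HR I.
  move: HR; move E: (g_w g0 wi) => st HR.
  case: HR Hnet E.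
  + move=> w v resp t st0 Hph _ Hnet E; subst st0; exact: (w_resp_wait I Hnet Hph).
  + move=> w v resp t st0 Hph Hmaj tw Hnet E; subst st0; exact: (w_resp_put Hf1 Hf2 I Hnet Hph Hmaj).
  + move=> o t st0 _ Hnet E; subst st0; exact: (step_w_same wi I Hnet).
  + move=> w t acks st0 Hph _ Hnet E; subst st0; exact: (w_ack_wait I Hnet Hph).
  + move=> w t acks st0 Hph Hk Hnet E; subst st0; exact: (w_ack_done I Hnet Hph Hk).
  + move=> w st0 _ Hnet E; subst st0; exact: (step_w_same wi I Hnet).
- move=> g0 n1 n2 s ri p l0 st' Hnet _ HR I.
  move: HR; move E: (g_r g0 ri) => st HR.
  case: HR Hnet E.
  + move=> r resp t st0 Hph _ Hnet E; subst st0; exact: (r_resp_wait I Hnet Hph).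
  + move=> r resp t st0 Hph Hmaj trr Hnet E; subst st0; exact: (r_resp_data Hf1 Hf2 I Hnet Hph Hmaj).
  + move=> o t st0 _ Hnet E; subst st0; exact: (step_r_same ri I Hnet).
  + move=> r trr recv t c st0 Hph _ Hnet E; subst st0; exact: (r_data_wait I Hnet Hph).
  + move=> r trr recv t c st0 t' L Hph Hdec Hnet E; subst st0; exact: (r_data_done Hf Hcode I Hnet Hph Hdec).
  + move=> r t c st0 _ Hnet E; subst st0; exact: (step_r_same ri I Hnet).
- move=> g0 s _ _ _ I; exact: step_crash_srv.
- move=> g0 wi I; exact: step_crash_w.
- move=> g0 ri I; exact: step_crash_r.
Qed.

Lemma reachable_Inv tr g :
  1 <= f <= (n - 1) %/ 2 -> mds_decodes n (n - f) Phi Phiinv ->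
  reachable n f v0 Phi Phiinv tr g -> Inv tr g.
Proof.
move=> Hf Hcode; elim => [|tr0 g0 l g1 _ IH HS]; first exact: Inv_init.
exact: Inv_step HS.
Qed.

Lemma reachable_take tr g m :
  reachable n f v0 Phi Phiinv tr g -> exists g', reachable n f v0 Phi Phiinv (take m tr) g'.
Proof.
move=> HR; elim: HR m => [|tr0 g0 l g1 HR IH HS] m.
- by exists (init v0 Phi); constructor.
- rewrite -cats1 take_cat; case: ifP => _; first exact: IH.
  case: (m - size tr0) => [|m'] /=.
  + rewrite cats0; have [g2 H2] := IH (size tr0); rewrite take_size in H2; by exists g2.
  + rewrite cats1; exists g1; exact: ReachS HR HS.
Qed.

End SodaProof.


Unset Implicit Arguments.
Set Strict Implicit.

Theorem theorem4 (V C : Type) (n f : nat) (v0 : V) (Phi : nat -> V -> C)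
    (Phiinv : seq (nat * C) -> V)
    (Hf : 1 <= f <= (n - 1) %/ 2)
    (Hcode : mds_decodes n (n - f) Phi Phiinv)
    (tr : seq (label V)) (g : gstate V C)
    (Hexec : reachable n f v0 Phi Phiinv tr g) :
  P1 tr /\ P2 tr /\ P3 v0 tr.
Proof.
have I := reachable_Inv Hf Hcode Hexec.
move: (I) => [[T1 [T2 [T3 [T4 [T5 T6]]]]] [HQ [HFR _]]].
split; [|split].
-
  move=> o1 t1 v1 o2 t2 v2 Ht1 Ht2 [i [j [l1 [l2 [Hij [Hi [Hr1 [Hj Hinv]]]]]]]] Hprec.
  have Etr := nth_error_split Hj.
  have Hl1 : List.In l1 (take j tr) := nth_error_In_take Hij Hi.
  have InTr : forall x, List.In x (take j tr) -> List.In x tr.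
    by move=> x Hx; rewrite Etr; exact: In_app_l.
  have Hd : DoneTag (take j tr) o1 t1.
    clear Hprec Hi; case: o1 Ht1 Hr1 => [w|r] /= Ht1 Hr1.
    + case: l1 Hl1 Hr1 => // w' Hl1 Ew; subst w'.
      have [g'' Hg''] := reachable_take j Hexec.
      have [[_ [_ [_ [_ [_ T6']]]]] _] := reachable_Inv Hf Hcode Hg''.
      have [t [v Hp]] := T6' _ Hl1.
      have [Et _] := T1 _ _ _ _ _ (InTr _ Hp) Ht1; subst t.
      split => //; by exists v.
    + case: l1 Hl1 Hr1 => // r' v' t' Hl1 Er; subst r'.
      have [_ Et] := T4 _ _ _ _ _ (InTr _ Hl1) Ht1; subst t'.
      by exists v'.
  have := HFR _ _ _ _ _ _ Etr Hinv Hd.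
  case: o2 Ht2 Hprec Hinv => [w|r] /= Ht2 Hprec Hinv.
  + move=> [F1 _]; have Hlt := F1 _ _ Ht2.
    case: Hprec => [H|[Et _]]; first exact: tag_le_lt_false (tag_lt_le Hlt) H.
    by subst t2; rewrite tag_lt_irr in Hlt.
  + move=> [F1 _]; have Hle := F1 _ _ Ht2.
    case: Hprec => [H|[_ [H _]]] //; exact: tag_le_lt_false Hle H.
-
  move=> o1 t1 v1 o2 t2 v2 Ht1 Ht2 Hw Hne.
  case: o1 Ht1 Hw Hne => [w1|r1] //= Ht1 _ Hne.
  case: (tag_total t1 t2) => [H|[Et|H]].
  + left; by left.
  + subst t2; case: o2 Ht2 Hne => [w2|r2] /= Ht2 Hne.
    * by case: Hne; rewrite (T3 _ _ _ _ _ Ht1 Ht2).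
    * left; right; by split.
  + right; by left.
-
  move=> r t v Ht; rewrite /= in Ht.
  split.
  + move=> Hno; case: (T5 _ _ _ Ht) => [[_ ->]//|[w Hw]].
    case: Hno; exists w, t, v; split => //; right; by split.
  + move=> [w [tw [vw [Hw Hp]]]].
    case: (T5 _ _ _ Ht) => [[Et Ev]|[w0 Hw0]].
    * subst t; exfalso; have [_ Hpos] := T2 _ _ _ Hw.
      case: Hp => [H|[E _]]; [move: H; rewrite /tag_lt /t0 /=; lia | by subst tw; rewrite /t0 in Hpos].
    * exists w0, t, v; split => //; split; first by right.
      split => // w' tw' vw' Hw' Hp'.
      case: Hp' => [H|[E _]]; [right; by left | left; subst tw'; exact: T3 _ _ _ _ _ Hw' Hw0].
Qed.
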